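(* Let $\theta\in(0,2\pi)$. Then for all $x,y\in S_\theta$: (1) if $\theta\in(0,\pi)$, then $s_{S_\theta}(x,y)\le {\rm th}(\rho_{S_\theta}(x,y)/2)\le (\pi/\theta)\sin(\theta/2)\, s_{S_\theta}(x,y)$; (2) if $\theta=\pi$, then $s_{S_\theta}(x,y)={\rm th}(\rho_{S_\theta}(x,y)/2)$; (3) if $\theta\in(\pi,2\pi)$, then $(\pi/\theta)\,s_{S_\theta}(x,y)\le {\rm th}(\rho_{S_\theta}(x,y)/2)\le s_{S_\theta}(x,y)$. Furthermore, these bounds are sharp.
   Context: $S_\theta=\{x\in\mathbb{C}:0<\arg(x)<\theta\}$. For a domain $G\subsetneq\mathbb{C}$, $s_G(x,y)=\frac{|x-y|}{\inf_{z\in\partial G}(|x-z|+|z-y|)}$. The hyperbolic metric of the upper half-plane $\mathbb{H}^2=\{z:{\rm Im}\,z>0\}$ is given by ${\rm th}(\rho_{\mathbb{H}^2}(u,v)/2)=|u-v|/|u-\overline{v}|$, and the hyperbolic metric of the sector is $\rho_{S_\theta}(x,y)=\rho_{\mathbb{H}^2}(x^{\pi/\theta},y^{\pi/\theta})$ (principal branch of the power, which maps $S_\theta$ conformally onto $\mathbb{H}^2$). *)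

(* Defs.v *)
From Stdlib Require Import Reals.
From Coquelicot Require Import Coquelicot.
Open Scope R_scope.

(* Argument of a nonzero complex number, taken in [0, 2*PI). *)
Definition carg (z : C) : R :=
  if Rle_dec 0 (Im z) then acos (Re z / Cmod z)
  else 2 * PI - acos (Re z / Cmod z).

Definition sector (theta : R) (z : C) : Prop :=
  z <> 0%C /\ 0 < carg z < theta.

(* Power z^a along the branch of arg with values in [0, 2*PI);
   for z in S_theta (theta < 2 PI) this is the branch mapping S_theta onto H^2
   when a = PI/theta. *)
Definition cpow (a : R) (z : C) : C :=
  (Rpower (Cmod z) a * cos (a * carg z), Rpower (Cmod z) a * sin (a * carg z)).

Definition is_boundary (G : C -> Prop) (z : C) : Prop :=
  forall eps : posreal,
    (exists w, G w /\ Cmod (w - z) < eps) /\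
    (exists w, ~ G w /\ Cmod (w - z) < eps).

Definition s_metric (G : C -> Prop) (x y : C) : R :=
  Cmod (x - y) /
  real (Glb_Rbar (fun r => exists z, is_boundary G z /\ r = Cmod (x - z) + Cmod (z - y))).

(* Hyperbolic metric of the upper half-plane:
   th(rho/2) = |u - v| / |u - conj v|, i.e. rho = 2 artanh(q) = ln((1+q)/(1-q)). *)
Definition rho_H (u v : C) : R :=
  let q := Cmod (u - v) / Cmod (u - Cconj v) in ln ((1 + q) / (1 - q)).

Definition rho_S (theta : R) (x y : C) : R :=
  rho_H (cpow (PI / theta) x) (cpow (PI / theta) y).

(* Main.v *)
Require Import Defs.
From Stdlib Require Import Reals Lra Psatz.
From Coquelicot Require Import Coquelicot.
Open Scope R_scope.

Lemma mono (f df : R -> R) (a b : R) : a <= b ->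
  (forall x, a <= x <= b -> is_derive f x (df x)) ->
  (forall x, a <= x <= b -> 0 <= df x) -> f a <= f b.
Proof.
  intros Hab Hd Hp.
  destruct (MVT_gen f a b df) as [c [Hc Heq]].
  - intros x Hx. apply Hd. rewrite Rmin_left in Hx by lra. rewrite Rmax_right in Hx by lra. lra.
  - intros x Hx. rewrite Rmin_left in Hx by lra. rewrite Rmax_right in Hx by lra.
    apply derivable_continuous_pt. exists (df x). apply is_derive_Reals, Hd; lra.
  - rewrite Rmin_left in Hc by lra. rewrite Rmax_right in Hc by lra.
    assert (0 <= df c * (b - a)) by (apply Rmult_le_pos; [apply Hp; lra | lra]). lra.
Qed.

Lemma T1 k u : 0 <= k <= 1 -> 0 <= u <= PI -> k * sin u <= sin (k * u).
Proof.
  intros Hk Hu.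
  assert (H := mono (fun u => sin (k*u) - k * sin u) (fun u => k * cos (k*u) - k * cos u) 0 u).
  simpl in H. rewrite Rmult_0_r, sin_0 in H.
  enough (0 - k * 0 <= sin (k * u) - k * sin u) by lra.
  apply H; [lra | |].
  - intros x Hx. auto_derive; [trivial | ring].
  - intros x Hx. assert (cos x <= cos (k*x)).
    { apply cos_decr_1; nra. }
    nra.
Qed.

Lemma T2 k u : 1 <= k -> 0 <= u -> k * u <= PI -> sin (k * u) <= k * sin u.
Proof.
  intros Hk Hu Hku.
  assert (H := mono (fun u => k * sin u - sin (k*u)) (fun u => k * cos u - k * cos (k * u)) 0 u).
  simpl in H. rewrite Rmult_0_r, sin_0 in H.
  enough (k * 0 - 0 <= k * sin u - sin (k * u)) by lra.
  apply H; [lra | |].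
  - intros x Hx. auto_derive; [trivial | ring].
  - intros x Hx. assert (cos (k*x) <= cos x).
    { apply cos_decr_1; nra. }
    nra.
Qed.

Lemma hpos k w : 1 <= k -> 0 <= w -> k * w <= PI ->
  0 <= cos w * sin (k*w) - k * sin w * cos (k*w).
Proof.
  intros Hk Hw Hkw.
  assert (H := mono (fun w => cos w * sin (k*w) - k * sin w * cos (k*w))
     (fun w => (k*k-1) * sin w * sin (k*w)) 0 w).
  simpl in H. rewrite Rmult_0_r, sin_0, cos_0 in H.
  enough (1 * 0 - k * 0 * 1 <= cos w * sin (k * w) - k * sin w * cos (k * w)) by lra.
  apply H; [lra | |].
  - intros x Hx. auto_derive; [trivial | ring].
  - intros x Hx. assert (0 <= sin x) by (apply sin_ge_0; nra).
    assert (0 <= sin (k*x)) by (apply sin_ge_0; nra).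
    apply Rmult_le_pos; [apply Rmult_le_pos|]; nra.
Qed.

Lemma hneg k w : 0 <= k <= 1 -> 0 <= w <= PI ->
  cos w * sin (k*w) - k * sin w * cos (k*w) <= 0.
Proof.
  intros Hk Hw.
  assert (H := mono (fun w => - (cos w * sin (k*w) - k * sin w * cos (k*w)))
     (fun w => (1 - k*k) * sin w * sin (k*w)) 0 w).
  simpl in H. rewrite Rmult_0_r, sin_0, cos_0 in H.
  enough (- (1 * 0 - k * 0 * 1) <= - (cos w * sin (k * w) - k * sin w * cos (k * w))) by lra.
  apply H; [lra | |].
  - intros x Hx. auto_derive; [trivial | ring].
  - intros x Hx. assert (0 <= sin x) by (apply sin_ge_0; nra).
    assert (0 <= sin (k*x)) by (apply sin_ge_0; nra).
    apply Rmult_le_pos; [apply Rmult_le_pos|]; nra.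
Qed.

Lemma T3 k u v : 1 <= k -> 0 < u <= v -> k * v <= PI ->
  sin u * sin (k * v) <= sin v * sin (k * u).
Proof.
  intros Hk Huv Hkv.
  destruct (Req_dec (k*v) PI) as [E|E].
  { rewrite E, sin_PI. assert (0 <= sin v) by (apply sin_ge_0; nra).
    assert (0 <= sin (k*u)) by (apply sin_ge_0; nra). nra. }
  assert (Hs : forall w, u <= w <= v -> 0 < sin (k*w)).
  { intros w Hw. apply sin_gt_0; nra. }
  assert (H := mono (fun w => sin w / sin (k*w))
     (fun w => (cos w * sin (k*w) - k * sin w * cos (k*w)) / (sin (k*w))^2) u v).
  simpl in H.
  assert (sin u / sin (k*u) <= sin v / sin (k*v)).
  { apply H; [lra | |].
    - intros x Hx. specialize (Hs x Hx). auto_derive; [lra | field; lra].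
    - intros x Hx. specialize (Hs x Hx). apply Rdiv_le_0_compat.
      + apply hpos; nra.
      + nra. }
  assert (H1 := Hs u ltac:(lra)). assert (H2 := Hs v ltac:(lra)).
  apply Rmult_le_compat_r with (r := sin (k*u) * sin (k*v)) in H0; [|nra].
  replace (sin u / sin (k * u) * (sin (k * u) * sin (k * v))) with (sin u * sin (k*v)) in H0 by (field; lra).
  replace (sin v / sin (k * v) * (sin (k * u) * sin (k * v))) with (sin v * sin (k*u)) in H0 by (field; lra).
  exact H0.
Qed.

Lemma T3' k u v : 0 < k <= 1 -> 0 < u <= v -> v < PI ->
  sin v * sin (k * u) <= sin u * sin (k * v).
Proof.
  intros Hk Huv Hv.
  assert (Hs : forall w, u <= w <= v -> 0 < sin (k*w)).
  { intros w Hw. apply sin_gt_0; nra. }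
  assert (H := mono (fun w => - (sin w / sin (k*w)))
     (fun w => - ((cos w * sin (k*w) - k * sin w * cos (k*w)) / (sin (k*w))^2)) u v).
  simpl in H.
  assert (- (sin u / sin (k*u)) <= - (sin v / sin (k*v))).
  { apply H; [lra | |].
    - intros x Hx. specialize (Hs x Hx). auto_derive; [lra | field; lra].
    - intros x Hx. specialize (Hs x Hx).
      assert (cos x * sin (k * x) - k * sin x * cos (k * x) <= 0) by (apply hneg; lra).
      assert (0 < sin (k*x) ^2) by nra.
      cbv beta. replace (sin (k*x) * (sin (k*x) * 1)) with (sin (k*x)^2) by ring.
      enough ((cos x * sin (k * x) - k * sin x * cos (k * x)) / sin (k * x) ^ 2 <= 0) by lra.
      unfold Rdiv; assert (0 < / sin (k*x)^2) by (apply Rinv_0_lt_compat; lra); nra. }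
  assert (H1 := Hs u ltac:(lra)). assert (H2 := Hs v ltac:(lra)).
  assert (sin v / sin (k*v) <= sin u / sin (k*u)) by lra.
  apply Rmult_le_compat_r with (r := sin (k*u) * sin (k*v)) in H3; [|nra].
  replace (sin u / sin (k * u) * (sin (k * u) * sin (k * v))) with (sin u * sin (k*v)) in H3 by (field; lra).
  replace (sin v / sin (k * v) * (sin (k * u) * sin (k * v))) with (sin v * sin (k*u)) in H3 by (field; lra).
  exact H3.
Qed.

Lemma expm x : exp x * exp (-x) = 1.
Proof. rewrite <- exp_plus; replace (x + - x) with 0 by ring; apply exp_0. Qed.

Lemma ch2_sh2 x : cosh x * cosh x - sinh x * sinh x = 1.
Proof. unfold cosh, sinh. assert (H := expm x). nra. Qed.

Lemma sinh_ge0 x : 0 <= x -> 0 <= sinh x.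
Proof.
  intros H. destruct H as [H|H]. - rewrite <- sinh_0. left. apply sinh_lt; lra.
  - subst. rewrite sinh_0. lra.
Qed.

Lemma cosh_pos x : 0 < cosh x.
Proof. unfold cosh. assert (0 < exp x) by apply exp_pos. assert (0 < exp (-x)) by apply exp_pos. lra. Qed.

Ltac dsh := unfold sinh, cosh; auto_derive; [trivial | try (field_simplify; ring)].

Lemma cosh_mono a b : 0 <= a <= b -> cosh a <= cosh b.
Proof.
  intros H. apply (mono cosh sinh a b); [lra | |].
  - intros x Hx. unfold sinh, cosh. auto_derive; [trivial | field].
  - intros x Hx. apply sinh_ge0; lra.
Qed.

Lemma hyp1 k X : 1 <= k -> 0 <= X -> k * sinh X <= sinh (k * X).
Proof.
  intros Hk HX.
  assert (H := mono (fun X => sinh (k*X) - k * sinh X) (fun X => k * cosh (k*X) - k * cosh X) 0 X).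
  simpl in H. rewrite Rmult_0_r, sinh_0 in H.
  enough (0 - k * 0 <= sinh (k*X) - k * sinh X) by lra.
  apply H; [lra | |].
  - intros x Hx. unfold sinh, cosh. auto_derive; [trivial | field].
  - intros x Hx. assert (cosh x <= cosh (k*x)) by (apply cosh_mono; nra). nra.
Qed.

Lemma hyp1' k X : 0 <= k <= 1 -> 0 <= X -> sinh (k * X) <= k * sinh X.
Proof.
  intros Hk HX.
  assert (H := mono (fun X => k * sinh X - sinh (k*X)) (fun X => k * cosh X - k * cosh (k*X)) 0 X).
  simpl in H. rewrite Rmult_0_r, sinh_0 in H.
  enough (k * 0 - 0 <= k * sinh X - sinh (k*X)) by lra.
  apply H; [lra | |].
  - intros x Hx. unfold sinh, cosh. auto_derive; [trivial | field].
  - intros x Hx. assert (cosh (k*x) <= cosh x) by (apply cosh_mono; nra). nra.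
Qed.

Lemma hyp2 k X : 0 <= k <= 1 -> 0 <= X -> k * sinh X * cosh (k*X) <= sinh (k*X) * cosh X.
Proof.
  intros Hk HX.
  assert (H := mono (fun X => sinh (k*X) * cosh X - k * sinh X * cosh (k*X))
     (fun X => (1 - k*k) * sinh X * sinh (k*X)) 0 X).
  simpl in H. rewrite Rmult_0_r, sinh_0 in H.
  enough (0 * cosh 0 - k * 0 * cosh 0 <= sinh (k*X) * cosh X - k * sinh X * cosh (k*X)) by lra.
  apply H; [lra | |].
  - intros x Hx. unfold sinh, cosh. auto_derive; [trivial | field].
  - intros x Hx. assert (0 <= sinh x) by (apply sinh_ge0; lra).
    assert (0 <= sinh (k*x)) by (apply sinh_ge0; nra).
    apply Rmult_le_pos; [apply Rmult_le_pos|]; nra.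
Qed.

Lemma m_ge0 u : 0 <= u -> u <= sinh u * cosh u.
Proof.
  intros Hu.
  assert (H := mono (fun u => sinh u * cosh u - u) (fun u => 2 * sinh u * sinh u) 0 u).
  simpl in H. rewrite sinh_0 in H.
  enough (0 * cosh 0 - 0 <= sinh u * cosh u - u) by lra.
  apply H; [lra | |].
  - intros x Hx. assert (E := ch2_sh2 x). unfold sinh, cosh in *. auto_derive; [trivial | nra].
  - intros x Hx. nra.
Qed.

Lemma j_ge0 u : 0 <= u -> 0 <= sinh u - u * cosh u + sinh u ^ 3 / 3.
Proof.
  intros Hu.
  assert (H := mono (fun u => sinh u - u * cosh u + sinh u ^ 3 / 3)
     (fun u => sinh u * (sinh u * cosh u - u)) 0 u).
  simpl in H. rewrite sinh_0 in H.
  enough (0 - 0 * cosh 0 + 0 * (0 * (0 * 1)) / 3 <= sinh u - u * cosh u + sinh u ^ 3 / 3) by lra.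
  apply H; [lra | |].
  - intros x Hx. unfold sinh, cosh. auto_derive; [trivial | field].
  - intros x Hx. assert (0 <= sinh x) by (apply sinh_ge0; lra).
    assert (x <= sinh x * cosh x) by (apply m_ge0; lra). nra.
Qed.

Lemma sinh_pos x : 0 < x -> 0 < sinh x.
Proof. intros. rewrite <- sinh_0. apply sinh_lt; lra. Qed.

Lemma nu_mono a b : 0 < a <= b ->
  a*a / (sinh a * sinh a) + a*a/3 <= b*b / (sinh b * sinh b) + b*b/3.
Proof.
  intros Hab.
  apply (mono (fun u => u*u / (sinh u * sinh u) + u*u/3)
    (fun u => 2 * u * (sinh u - u * cosh u + sinh u ^ 3 / 3) / (sinh u ^ 3)) a b); [lra | |].
  - intros x Hx. assert (0 < sinh x) by (apply sinh_pos; lra).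
    assert (exp x - exp (-x) <> 0) by (unfold sinh in *; lra).
    unfold sinh, cosh in *. auto_derive.
    + repeat split; auto. intro. apply H0. nra.
    + field. auto.
  - intros x Hx. assert (0 < sinh x) by (apply sinh_pos; lra).
    assert (0 <= sinh x - x * cosh x + sinh x ^ 3 / 3) by (apply j_ge0; lra).
    apply Rdiv_le_0_compat; [nra | ]. apply pow_lt; lra.
Qed.

Lemma cos_ub_eq a : cos_ub a = 1 - a^2/2 + a^4/24 - a^6/720 + a^8/40320.
Proof.
  unfold cos_ub, cos_approx, cos_term. cbn [sum_f_R0 Nat.mul Nat.add].
  rewrite !fact_simpl, !mult_INR. cbn [Factorial.fact]. simpl INR. field.
Qed.

Lemma sin_lb_eq a : sin_lb a = a - a^3/6 + a^5/120 - a^7/5040.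
Proof.
  unfold sin_lb, sin_approx, sin_term. cbn [sum_f_R0 Nat.mul Nat.add].
  rewrite !fact_simpl, !mult_INR. cbn [Factorial.fact]. simpl INR. field.
Qed.

Lemma cos_lb_eq a : cos_lb a = 1 - a^2/2 + a^4/24 - a^6/720.
Proof.
  unfold cos_lb, cos_approx, cos_term. cbn [sum_f_R0 Nat.mul Nat.add].
  rewrite !fact_simpl, !mult_INR. cbn [Factorial.fact]. simpl INR. field.
Qed.

Lemma PI_lt_315 : PI < 315/100.
Proof.
  destruct (Rlt_or_le PI (315/100)) as [H|H]; [exact H|exfalso].
  assert (H1 := COS (1575/1000) ltac:(lra) ltac:(lra)).
  assert (H2 : 0 <= cos (1575/1000)) by (apply cos_ge_0; lra).
  rewrite cos_ub_eq in H1. lra.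
Qed.

Lemma PI_gt_3 : 3 < PI.
Proof. assert (H := PI2_3_2). lra. Qed.

Lemma E2phi phi : 0 < phi <= PI/2 -> 3 * phi^2 <= sin phi ^ 2 * (PI^2/2 + phi^2).
Proof.
  intros Hphi. assert (HP1 := PI_lt_315). assert (HP2 := PI_gt_3).
  destruct (Rle_or_lt phi (5/4)) as [Hs|Hs].
  - assert (H := SIN phi ltac:(lra) ltac:(lra)). rewrite sin_lb_eq in H.
    set (t := phi^2).
    assert (Ht : 0 < t <= 25/16) by (unfold t; nra).
    set (S := 1 - t/6 + t^2/120 - t^3/5040).
    assert (HS : phi - phi^3/6 + phi^5/120 - phi^7/5040 = phi * S) by (unfold S, t; field).
    rewrite HS in H.
    assert (HS0 : 0 <= S).
    { unfold S. nra. }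
    assert (Hsin : (phi * S)^2 <= sin phi ^2) by (apply pow_incr; nra).
    assert (HPP : 9/2 <= PI^2/2) by nra.
    assert (Hkey : 3 <= S^2 * (9/2 + t)).
    { destruct (Rle_or_lt t 1) as [Ht1|Ht1].
      - assert (833/1000 <= S) by (unfold S; nra). nra.
      - assert (747/1000 <= S) by (unfold S; nra). nra. }
    assert (E : (phi*S)^2 = t * S^2) by (unfold t; ring).
    rewrite E in Hsin. fold t. nra.
  - set (d := PI/2 - phi).
    assert (Hd : 0 <= d <= 33/100) by (unfold d; lra).
    assert (Hsd : sin phi = cos d) by (unfold d; rewrite cos_shift; reflexivity).
    assert (H := COS d ltac:(lra) ltac:(lra)). rewrite cos_lb_eq in H.
    assert (Hd4 : 0 <= d^4) by nra. assert (Hd2 : d^2 <= 1) by nra.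
    assert (d^6 <= d^4) by (replace (d^6) with (d^4*d^2) by ring; nra).
    assert (Hc : 1 - d^2/2 <= cos d) by lra.
    assert (Hc2 : 1 - d^2 <= cos d ^ 2) by nra.
    rewrite Hsd. replace phi with (PI/2 - d) by (unfold d; ring).
    assert (0 <= PI^2/2 + (PI/2-d)^2) by nra.
    assert (Hm : (1 - d^2) * (PI^2/2 + (PI/2-d)^2) <= cos d ^2 * (PI^2/2 + (PI/2-d)^2)) by nra.
    enough (3 * (PI/2 - d)^2 <= (1 - d^2) * (PI^2/2 + (PI/2-d)^2)) by lra.
    assert (E : (1 - d^2) * (PI^2/2 + (PI/2-d)^2) - 3 * (PI/2 - d)^2
       = d * (2*PI - 2*d - d * (3*PI^2/4) + d^2 * (PI - d))) by field.
    assert (0 <= 2*PI - 2*d - d * (3*PI^2/4) + d^2 * (PI - d)) by nra.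
    nra.
Qed.

Lemma Kge1 k : 1 <= k -> 1 <= k * sin (PI / (2*k)).
Proof.
  intros Hk. assert (HP := PI_RGT_0).
  assert (E : k * (PI / (2*k)) = PI/2) by (field; lra).
  assert (H := T2 k (PI/(2*k)) Hk ltac:(apply Rlt_le, Rdiv_lt_0_compat; lra) ltac:(rewrite E; lra)).
  replace (k * (PI / (2*k))) with (PI/2) in H by (field; lra). rewrite sin_PI2 in H. lra.
Qed.

Lemma s0_pos k : 1 <= k -> 0 < sin (PI / (2*k)).
Proof.
  intros Hk. assert (HP := PI_RGT_0). apply sin_gt_0.
  - apply Rdiv_lt_0_compat; lra.
  - apply Rle_lt_trans with (PI/2); [|lra]. unfold Rdiv. apply Rmult_le_compat_l; [lra|].
    apply Rinv_le_contravar; lra.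
Qed.

Lemma E2k k : 1 <= k -> (k*k-1)/3 <= k*k - 1 / (sin (PI/(2*k)))^2.
Proof.
  intros Hk. assert (HP := PI_RGT_0). set (phi := PI/(2*k)).
  assert (Hphi : 0 < phi <= PI/2).
  { unfold phi; split; [apply Rdiv_lt_0_compat; lra|]. unfold Rdiv. 
    apply Rmult_le_compat_l; [lra|]. apply Rinv_le_contravar; lra. }
  assert (H := E2phi phi Hphi).
  assert (HPk : PI = 2 * k * phi) by (unfold phi; field; lra).
  assert (Hs := s0_pos k Hk). fold phi in Hs.
  rewrite HPk in H.
  assert (H' : 3 <= sin phi ^2 * (2*k*k + 1)).
  { assert (0 < phi^2) by nra.
    apply Rmult_le_reg_r with (phi^2); [lra|].
    replace (sin phi ^ 2 * (2 * k * k + 1) * phi ^ 2) with (sin phi ^ 2 * ((2 * k * phi) ^ 2 / 2 + phi ^ 2)) by field.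
    lra. }
  assert (0 < sin phi ^2) by nra.
  apply Rmult_le_reg_r with (3 * sin phi ^2); [lra|].
  replace ((k * k - 1) / 3 * (3 * sin phi ^ 2)) with ((k*k-1) * sin phi ^2) by field.
  replace ((k * k - 1 / sin phi ^ 2) * (3 * sin phi ^ 2)) with (3 * k * k * sin phi ^2 - 3) by (field; lra).
  nra.
Qed.

Lemma Ebis k X : 1 <= k -> 0 <= X ->
  let s0 := sin (PI/(2*k)) in let K := k * s0 in
  let A := sinh X ^ 2 in let B := sinh (k*X) ^ 2 in
  s0^2 * B <= (K^2 - 1) * A * B + K^2 * A.
Proof.
  intros Hk HX s0 K A B.
  destruct HX as [HX|HX].
  2: { subst X. unfold A, B. rewrite Rmult_0_r, sinh_0. lra. }
  assert (HA : 0 < sinh X) by (apply sinh_pos; lra).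
  assert (HB : 0 < sinh (k*X)) by (apply sinh_pos; nra).
  assert (Hnu := nu_mono X (k*X) ltac:(nra)).
  assert (HE2 := E2k k Hk). fold s0 in HE2.
  assert (Hs := s0_pos k Hk). fold s0 in Hs.
  assert (H1 : 1/A - k*k/B <= (k*k-1)/3).
  { unfold A, B. assert (0 < X*X) by nra.
    apply Rmult_le_reg_r with (X*X); [lra|].
    replace ((1 / sinh X ^ 2 - k * k / sinh (k * X) ^ 2) * (X * X)) with
      (X * X / (sinh X * sinh X) - k * X * (k * X) / (sinh (k * X) * sinh (k * X))) by (field; lra).
    replace ((k * k - 1) / 3 * (X * X)) with (k * X * (k * X) / 3 - X * X / 3) by field.
    lra. }
  assert (H2 : 1/A - k*k/B <= k*k - 1/s0^2) by lra.
  assert (HA2 : 0 < A) by (unfold A; nra). assert (HB2 : 0 < B) by (unfold B; nra).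
  assert (Hs2 : 0 < s0^2) by nra.
  apply Rmult_le_compat_r with (r := s0^2 * A * B) in H2; [|apply Rmult_le_pos; [apply Rmult_le_pos|]; lra].
  replace ((1 / A - k * k / B) * (s0 ^ 2 * A * B)) with (s0^2 * B - K^2 * A) in H2 by (unfold K; field; lra).
  replace ((k * k - 1 / s0 ^ 2) * (s0 ^ 2 * A * B)) with (K^2 * A * B - A * B) in H2 by (unfold K; field; lra).
  lra.
Qed.

Definition pol (r a : R) : C := (r * cos a, r * sin a).

Lemma sc x : sin x ^ 2 + cos x ^ 2 = 1.
Proof. assert (H := sin2_cos2 x). unfold Rsqr in H. nra. Qed.

Lemma Cmod2 (z : C) : Cmod z ^ 2 = fst z ^ 2 + snd z ^ 2.
Proof. unfold Cmod. apply pow2_sqrt. nra. Qed.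

Lemma Cmod_ge0' (z : C) : 0 <= Cmod z.
Proof. apply Cmod_ge_0. Qed.

Lemma Cmod_le_sq (z w : C) : Cmod z ^ 2 <= Cmod w ^ 2 -> Cmod z <= Cmod w.
Proof. intros H. assert (0 <= Cmod z) by apply Cmod_ge_0. assert (0 <= Cmod w) by apply Cmod_ge_0. nra. Qed.

Lemma Cminus_pair a b c d : ((a,b) - (c,d))%C = (a - c, b - d).
Proof. reflexivity. Qed.

Lemma cmod_pol r a : 0 <= r -> Cmod (pol r a) = r.
Proof.
  intros Hr. unfold Cmod, pol. cbn [fst snd].
  replace ((r * cos a) ^ 2 + (r * sin a) ^ 2) with (r^2 * (sin a ^2 + cos a ^2)) by ring. rewrite sc, Rmult_1_r.
  apply sqrt_pow2; lra.
Qed.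

Lemma carg_pol r a : 0 < r -> 0 < a < 2 * PI -> carg (pol r a) = a.
Proof.
  intros Hr Ha. unfold carg. rewrite cmod_pol by lra. unfold pol; simpl.
  replace (r * cos a / r) with (cos a) by (field; lra).
  destruct (Rle_lt_dec a PI) as [H|H].
  - destruct (Rle_dec 0 (r * sin a)) as [_|N].
    + apply acos_cos; lra.
    + exfalso. apply N. assert (0 <= sin a) by (apply sin_ge_0; lra). nra.
  - destruct (Rle_dec 0 (r * sin a)) as [N|_].
    + exfalso. assert (sin a < 0) by (apply sin_lt_0; lra). nra.
    + replace (cos a) with (cos (2*PI - a)).
      * rewrite acos_cos by lra. ring.
      * rewrite cos_minus, cos_2PI, sin_2PI. ring.
Qed.

Lemma polar (z : C) : z <> 0%C -> z = pol (Cmod z) (carg z) /\ 0 <= carg z < 2 * PI.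
Proof.
  intros Hz.
  assert (Hm : 0 < Cmod z).
  { destruct (Cmod_ge_0 z) as [H|H]; [exact H|]. exfalso. apply Hz. symmetry in H. now apply Cmod_eq_0 in H. }
  unfold carg. destruct z as [x y].
  assert (H2 := Cmod2 (x,y)). simpl in H2 |- *. set (m := Cmod (x,y)) in *.
  assert (Hc : -1 <= x / m <= 1).
  { split; apply Rmult_le_reg_r with m; try lra; unfold Rdiv; rewrite Rmult_assoc, Rinv_l, Rmult_1_r by lra; nra. }
  assert (E : 1 - (x/m)² = (y/m)^2).
  { unfold Rsqr. replace ((y/m)^2) with (y^2/m^2) by (field; lra). replace (y^2) with (m^2 - x^2) by lra. field. lra. }
  assert (Hacb := acos_bound (x/m)). assert (HPI := PI_RGT_0).
  destruct (Rle_dec 0 y) as [Hy|Hy].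
  - split; [|lra]. unfold pol. rewrite cos_acos, sin_acos, E by exact Hc.
    rewrite sqrt_pow2 by (apply Rdiv_le_0_compat; lra). f_equal; field; lra.
  - assert (Hpos : 0 < acos (x/m)).
    { destruct (proj1 Hacb) as [H|H]; [exact H|]. exfalso.
      assert (cos (acos (x/m)) = 1) by (rewrite <- H; apply cos_0).
      rewrite cos_acos in H0 by exact Hc.
      assert (x = m) by (apply Rmult_eq_reg_r with (/m); [|apply Rinv_neq_0_compat; lra]; unfold Rdiv in H0; rewrite H0, Rinv_r; lra).
      nra. }
    split; [|lra]. unfold pol.
    rewrite cos_minus, sin_minus, cos_2PI, sin_2PI, cos_acos, sin_acos, E by exact Hc.
    replace ((y/m)^2) with ((-y/m)^2) by (field; lra).
    rewrite sqrt_pow2 by (apply Rdiv_le_0_compat; lra). f_equal; field; lra.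
Qed.

Lemma pol_neq0 r a : 0 < r -> pol r a <> 0%C.
Proof. intros Hr H. assert (Cmod (pol r a) = 0) by (rewrite H; apply Cmod_0). rewrite cmod_pol in H0; lra. Qed.

Lemma sector_pol th z : 0 < th <= 2 * PI ->
  sector th z <-> exists r a, 0 < r /\ 0 < a < th /\ z = pol r a.
Proof.
  intros Hth. split.
  - intros [Hz Ha]. destruct (polar z Hz) as [E _]. exists (Cmod z), (carg z).
    split; [|split; [exact Ha|exact E]].
    destruct (Cmod_ge_0 z) as [H|H]; [exact H|]. exfalso. apply Hz. symmetry in H. now apply Cmod_eq_0 in H.
  - intros (r & a & Hr & Ha & ->). split; [apply pol_neq0; exact Hr|].
    rewrite carg_pol; lra.
Qed.

Lemma cpow_pol k r a : 0 < r -> 0 < a < 2 * PI -> cpow k (pol r a) = pol (Rpower r k) (k * a).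
Proof. intros Hr Ha. unfold cpow. rewrite cmod_pol, carg_pol by lra. reflexivity. Qed.

Lemma dist_pol r s a b : Cmod (pol r a - pol s b) ^ 2 = r^2 + s^2 - 2*r*s*cos (a - b).
Proof.
  unfold pol. rewrite Cminus_pair, Cmod2. simpl fst; simpl snd. rewrite cos_minus.
  assert (H1 := sc a). assert (H2 := sc b). nra.
Qed.

Lemma conj_pol s b : Cconj (pol s b) = pol s (-b).
Proof. unfold pol, Cconj. simpl. rewrite cos_neg, sin_neg. f_equal. ring. Qed.

Lemma dist_form R1 R2 w : 0 < R1 -> 0 < R2 ->
  R1^2 + R2^2 - 2*R1*R2*cos w = 4 * R1 * R2 * (sinh ((ln R1 - ln R2)/2) ^2 + sin (w/2) ^2).
Proof.
  intros H1 H2.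
  set (X := (ln R1 - ln R2)/2). set (M := exp ((ln R1 + ln R2)/2)).
  assert (E1 : R1 = M * exp X).
  { unfold M, X. rewrite <- exp_plus. rewrite <- (exp_ln R1) at 1 by lra. f_equal. field. }
  assert (E2 : R2 = M * exp (-X)).
  { unfold M, X. rewrite <- exp_plus. rewrite <- (exp_ln R2) at 1 by lra. f_equal. field. }
  assert (Hc : cos w = 1 - 2 * sin (w/2) * sin (w/2)) by (rewrite <- cos_2a_sin; f_equal; field).
  assert (Hx := expm X).
  assert (0 < exp X) by apply exp_pos. rewrite Hc, E1, E2. unfold sinh. rewrite exp_Ropp. field. lra.
Qed.

Lemma tanh_rho (u v : C) : 0 < snd u -> 0 < snd v ->
  tanh (rho_H u v / 2) = Cmod (u - v) / Cmod (u - Cconj v).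
Proof.
  intros Hu Hv. destruct u as [u1 u2]; destruct v as [v1 v2]. simpl in Hu, Hv.
  unfold rho_H. cbv zeta.
  set (a := Cmod ((u1,u2) - (v1,v2))). set (b := Cmod ((u1,u2) - Cconj (v1,v2))).
  assert (Ha2 : a^2 = (u1-v1)^2 + (u2-v2)^2) by (unfold a; rewrite Cminus_pair, Cmod2; reflexivity).
  assert (Hb2 : b^2 = (u1-v1)^2 + (u2+v2)^2).
  { unfold b, Cconj. cbn [fst snd]. rewrite Cminus_pair, Cmod2. cbn [fst snd]. ring. }
  assert (Ha0 : 0 <= a) by apply Cmod_ge_0. assert (Hb0 : 0 <= b) by apply Cmod_ge_0.
  assert (Hab : a < b) by nra.
  set (q := a / b).
  assert (Hq : 0 <= q < 1).
  { unfold q. split. apply Rdiv_le_0_compat; lra. apply Rmult_lt_reg_r with b; [lra|].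
    unfold Rdiv. rewrite Rmult_assoc, Rinv_l; lra. }
  set (w := (1 + q) / (1 - q)).
  assert (Hw : 0 < w) by (unfold w; apply Rdiv_lt_0_compat; lra).
  set (e := exp (ln w / 2)).
  assert (He : 0 < e) by apply exp_pos.
  assert (He2 : e * e = w).
  { unfold e. rewrite <- exp_plus. replace (ln w / 2 + ln w / 2) with (ln w) by field. apply exp_ln; lra. }
  unfold tanh, sinh, cosh. rewrite exp_Ropp. fold e.
  replace ((e - / e) / 2 / ((e + / e) / 2)) with ((e*e - 1) / (e*e + 1)) by (field; split; nra).
  rewrite He2. unfold w. field. lra.
Qed.

Lemma dist_AB R1 R2 al be : 0 < R1 -> 0 < R2 ->
  Cmod (pol R1 al - pol R2 be) ^ 2 = 4 * R1 * R2 * (sinh ((ln R1 - ln R2)/2) ^ 2 + sin ((al - be)/2) ^ 2).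
Proof. intros. rewrite dist_pol. apply dist_form; lra. Qed.

Lemma distc_AB R1 R2 al be : 0 < R1 -> 0 < R2 ->
  Cmod (pol R1 al - Cconj (pol R2 be)) ^ 2 = 4 * R1 * R2 * (sinh ((ln R1 - ln R2)/2) ^ 2 + sin ((al + be)/2) ^ 2).
Proof. intros. rewrite conj_pol, dist_pol. replace (al - - be) with (al + be) by ring. apply dist_form; lra. Qed.

Lemma sum_AB R1 R2 : 0 < R1 -> 0 < R2 ->
  (R1 + R2) ^ 2 = 4 * R1 * R2 * (sinh ((ln R1 - ln R2)/2) ^ 2 + 1).
Proof.
  intros. replace ((R1 + R2)^2) with (R1^2 + R2^2 - 2*R1*R2*cos PI) by (rewrite cos_PI; ring).
  rewrite dist_form by lra. replace (PI/2) with (PI/2) by reflexivity. rewrite sin_PI2. ring.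
Qed.

Definition Tq th (x y : C) : R :=
  Cmod (cpow (PI/th) x - cpow (PI/th) y) / Cmod (cpow (PI/th) x - Cconj (cpow (PI/th) y)).

Lemma Rpower_pos r k : 0 < Rpower r k.
Proof. apply exp_pos. Qed.

Lemma ka_range th a : 0 < th -> 0 < a < th -> 0 < PI/th * a < PI.
Proof.
  intros Hth Ha. assert (HP := PI_RGT_0). split.
  - apply Rmult_lt_0_compat; [apply Rdiv_lt_0_compat|]; lra.
  - replace (PI/th*a) with (PI * (a/th)) by (field; lra).
    assert (a / th < 1) by (apply Rmult_lt_reg_r with th; [lra|]; unfold Rdiv; rewrite Rmult_assoc, Rinv_l; lra).
    assert (0 < a/th) by (apply Rdiv_lt_0_compat; lra). nra.
Qed.

Lemma T_eq th x y : 0 < th < 2 * PI -> sector th x -> sector th y ->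
  tanh (rho_S th x y / 2) = Tq th x y.
Proof.
  intros Hth Hx Hy. apply sector_pol in Hx; [|lra]. apply sector_pol in Hy; [|lra].
  destruct Hx as (r & a & Hr & Ha & ->). destruct Hy as (s & b & Hs & Hb & ->).
  unfold rho_S, Tq. apply tanh_rho.
  - rewrite cpow_pol by lra. unfold pol; simpl. apply Rmult_lt_0_compat; [apply Rpower_pos|].
    apply sin_gt_0; apply ka_range; lra.
  - rewrite cpow_pol by lra. unfold pol; simpl. apply Rmult_lt_0_compat; [apply Rpower_pos|].
    apply sin_gt_0; apply ka_range; lra.
Qed.

Lemma T_polar th r s a b : 0 < th < 2 * PI -> 0 < r -> 0 < s -> 0 < a < th -> 0 < b < th ->
  let k := PI/th in let X := (ln r - ln s)/2 in
  let B := sinh (k*X) ^ 2 in let p' := sin (k * ((a-b)/2)) ^ 2 in let q' := sin (k * ((a+b)/2)) ^ 2 in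
  0 <= Tq th (pol r a) (pol s b) /\ 0 < B + q' /\ Tq th (pol r a) (pol s b) ^ 2 = (B + p') / (B + q').
Proof.
  intros Hth Hr Hs Ha Hb k X B p' q'.
  unfold Tq. fold k. rewrite !cpow_pol by lra.
  assert (H1 := dist_AB (Rpower r k) (Rpower s k) (k*a) (k*b) (Rpower_pos _ _) (Rpower_pos _ _)).
  assert (H2 := distc_AB (Rpower r k) (Rpower s k) (k*a) (k*b) (Rpower_pos _ _) (Rpower_pos _ _)).
  rewrite !ln_Rpower in H1, H2.
  replace ((k * ln r - k * ln s) / 2) with (k*X) in H1, H2 by (unfold X; field).
  replace ((k * a - k * b) / 2) with (k * ((a-b)/2)) in H1 by field.
  replace ((k * a + k * b) / 2) with (k * ((a+b)/2)) in H2 by field.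
  fold B p' in H1. fold B q' in H2.
  assert (Hq : 0 < sin (k * ((a+b)/2))).
  { apply sin_gt_0; replace (k * ((a+b)/2)) with (PI/th * ((a+b)/2)) by reflexivity; apply ka_range; lra. }
  assert (HB : 0 <= B) by (unfold B; nra).
  assert (Hq' : 0 < B + q') by (unfold q'; nra).
  set (N := Cmod (pol (Rpower r k) (k * a) - pol (Rpower s k) (k * b))) in *.
  set (D := Cmod (pol (Rpower r k) (k * a) - Cconj (pol (Rpower s k) (k * b)))) in *.
  assert (HR := Rpower_pos r k). assert (HS := Rpower_pos s k).
  assert (HD : 0 < D).
  { assert (0 <= D) by apply Cmod_ge_0. assert (0 < D^2). { rewrite H2. apply Rmult_lt_0_compat; [|lra]. nra. } nra. }
  assert (0 <= N) by apply Cmod_ge_0.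
  split; [apply Rdiv_le_0_compat; lra|]. split; [exact Hq'|].
  replace ((N / D)^2) with (N^2/D^2) by (field; lra). rewrite H1, H2. field. split; [lra|]. nra.
Qed.

Definition l2 th (z : C) := snd z * cos th - fst z * sin th.

Lemma sin_neg_range x : -PI < x < 0 -> sin x < 0.
Proof. intros. apply sin_lt_0_var; lra. Qed.

Lemma sin_pos_range2 x : -2*PI < x < -PI -> 0 < sin x.
Proof.
  intros H. replace x with ((x + 2*PI) - 2*PI) by ring.
  rewrite sin_minus, sin_2PI, cos_2PI. replace (sin (x + 2 * PI) * 1 - cos (x + 2 * PI) * 0) with (sin (x + 2*PI)) by ring.
  apply sin_gt_0; lra.
Qed.

Lemma sin_nonneg_range x : 0 <= x <= PI -> 0 <= sin x.
Proof. intros. apply sin_ge_0; lra. Qed.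

Lemma sin_nonpos_range x : PI <= x <= 2*PI -> sin x <= 0.
Proof. intros. apply sin_le_0; lra. Qed.

Lemma l2_pol th R phi : l2 th (pol R phi) = R * sin (phi - th).
Proof. unfold l2, pol; simpl. rewrite sin_minus. ring. Qed.

Lemma sector_hp_le th z : 0 < th <= PI ->
  (sector th z <-> 0 < snd z /\ l2 th z < 0).
Proof.
  intros Hth. assert (HP := PI_RGT_0).
  destruct (Req_dec (Cmod z) 0) as [E|Hz'].
  { apply Cmod_eq_0 in E. subst. unfold l2; simpl. split; [intros [H _]; congruence | lra]. }
  assert (Hz : z <> 0%C) by (intro E; apply Hz'; rewrite E; apply Cmod_0).
  destruct (polar z Hz) as [E Hr]. set (R := Cmod z) in *. set (phi := carg z) in *.
  assert (HR : 0 < R).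
  { destruct (Cmod_ge_0 z) as [H|H]; [exact H|]. exfalso. apply Hz. symmetry in H. now apply Cmod_eq_0 in H. }
  unfold sector. fold phi. rewrite E at 2 3. rewrite l2_pol. unfold pol; simpl.
  split.
  - intros [_ Hp]. split.
    + apply Rmult_lt_0_compat; [lra|]. apply sin_gt_0; lra.
    + assert (sin (phi - th) < 0) by (apply sin_neg_range; lra). nra.
  - intros [H1 H2]. split; [exact Hz|].
    assert (0 < sin phi) by (apply Rmult_lt_reg_l with R; lra).
    assert (sin (phi - th) < 0) by (apply Rmult_lt_reg_l with R; lra).
    assert (0 < phi).
    { destruct (proj1 Hr) as [Hq|Hq]; [exact Hq|]. rewrite <- Hq in H. rewrite sin_0 in H. lra. }
    assert (phi < PI).
    { destruct (Rlt_or_le phi PI) as [Hq|Hq]; [exact Hq|]. assert (sin phi <= 0) by (apply sin_nonpos_range; lra). lra. }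
    split; [lra|]. destruct (Rlt_or_le phi th) as [Hq|Hq]; [exact Hq|].
    assert (0 <= sin (phi - th)) by (apply sin_nonneg_range; lra). lra.
Qed.

Lemma sector_hp_gt th z : PI < th < 2 * PI ->
  (sector th z <-> 0 < snd z \/ l2 th z < 0).
Proof.
  intros Hth. assert (HP := PI_RGT_0).
  destruct (Req_dec (Cmod z) 0) as [E|Hz'].
  { apply Cmod_eq_0 in E. subst. unfold l2; simpl. split; [intros [H _]; congruence | lra]. }
  assert (Hz : z <> 0%C) by (intro E; apply Hz'; rewrite E; apply Cmod_0).
  destruct (polar z Hz) as [E Hr]. set (R := Cmod z) in *. set (phi := carg z) in *.
  assert (HR : 0 < R).
  { destruct (Cmod_ge_0 z) as [H|H]; [exact H|]. exfalso. apply Hz. symmetry in H. now apply Cmod_eq_0 in H. }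
  unfold sector. fold phi. rewrite E at 2 3. rewrite l2_pol. unfold pol; simpl.
  split.
  - intros [_ Hp]. destruct (Rlt_or_le phi PI).
    + left. apply Rmult_lt_0_compat; [lra|]. apply sin_gt_0; lra.
    + right. assert (sin (phi - th) < 0) by (apply sin_neg_range; lra). nra.
  - intros H. split; [exact Hz|]. destruct H as [H|H].
    + assert (Hs : 0 < sin phi) by (apply Rmult_lt_reg_l with R; lra).
      assert (Hp1 : phi < PI).
      { destruct (Rlt_or_le phi PI) as [Hq|Hq]; [exact Hq|]. assert (sin phi <= 0) by (apply sin_nonpos_range; lra). lra. }
      assert (Hp2 : 0 < phi).
      { destruct (proj1 Hr) as [Hq|Hq]; [exact Hq|]. rewrite <- Hq in Hs. rewrite sin_0 in Hs. lra. }
      lra.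
    + assert (Hs : sin (phi - th) < 0) by (apply Rmult_lt_reg_l with R; lra).
      assert (Hp2 : 0 < phi).
      { destruct (proj1 Hr) as [Hq|Hq]; [exact Hq|]. rewrite <- Hq in Hs.
        assert (0 < sin (0 - th)) by (apply sin_pos_range2; lra). lra. }
      split; [exact Hp2|]. destruct (Rlt_or_le phi th) as [Hq|Hq]; [exact Hq|].
      assert (0 <= sin (phi - th)) by (apply sin_nonneg_range; lra). lra.
Qed.

Lemma sq_le u v : 0 <= u -> 0 <= v -> u^2 <= v^2 -> u <= v.
Proof. intros. nra. Qed.

Lemma snd_lip (z w : C) : Rabs (snd w - snd z) <= Cmod (w - z).
Proof.
  apply sq_le; [apply Rabs_pos|apply Cmod_ge_0|].
  rewrite Cmod2. destruct z as [z1 z2]; destruct w as [w1 w2]. rewrite Cminus_pair. simpl fst; simpl snd.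
  rewrite pow2_abs. assert (0 <= (w1-z1)^2) by apply pow2_ge_0. lra.
Qed.

Lemma l2_lip th (z w : C) : Rabs (l2 th w - l2 th z) <= Cmod (w - z).
Proof.
  apply sq_le; [apply Rabs_pos|apply Cmod_ge_0|].
  rewrite Cmod2. destruct z as [z1 z2]; destruct w as [w1 w2]. rewrite Cminus_pair. unfold l2; simpl fst; simpl snd.
  rewrite pow2_abs. assert (H := sc th).
  replace (w2 * cos th - w1 * sin th - (z2 * cos th - z1 * sin th)) with ((w2 - z2) * cos th - (w1 - z1) * sin th) by ring.
  assert (0 <= ((w1 - z1) * cos th + (w2 - z2) * sin th)^2) by apply pow2_ge_0.
  assert (E: ((w1-z1)^2 + (w2-z2)^2) * (sin th^2 + cos th^2) = ((w2 - z2) * cos th - (w1 - z1) * sin th)^2 + ((w1 - z1) * cos th + (w2 - z2) * sin th)^2) by ring.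
  rewrite H in E. lra.
Qed.

Ltac near_in Hb e :=
  let w := fresh "w" in let Hw := fresh "Hw" in let Hd := fresh "Hd" in let He := fresh "He" in
  assert (He : 0 < e) by (try apply Rmin_pos; lra);
  destruct (Hb (mkposreal e He)) as [[w [Hw Hd]] _]; simpl in Hd.
Ltac near_out Hb e :=
  let w := fresh "w" in let Hw := fresh "Hw" in let Hd := fresh "Hd" in let He := fresh "He" in
  assert (He : 0 < e) by (try apply Rmin_pos; lra);
  destruct (Hb (mkposreal e He)) as [_ [w [Hw Hd]]]; simpl in Hd.

Lemma bnd_le th z : 0 < th <= PI -> is_boundary (sector th) z ->
  (snd z = 0 /\ l2 th z <= 0) \/ (l2 th z = 0 /\ 0 <= snd z).
Proof.
  intros Hth Hb.
  assert (Ha : 0 <= snd z).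
  { destruct (Rle_or_lt 0 (snd z)) as [H|H]; [exact H|]. exfalso.
    near_in Hb (- snd z).
    apply sector_hp_le in Hw; [|lra]. assert (L := snd_lip z w). apply Rabs_le_between in L. lra. }
  assert (Hb2 : l2 th z <= 0).
  { destruct (Rle_or_lt (l2 th z) 0) as [H|H]; [exact H|]. exfalso.
    near_in Hb (l2 th z).
    apply sector_hp_le in Hw; [|lra]. assert (L := l2_lip th z w). apply Rabs_le_between in L. lra. }
  assert (Hc : ~ (0 < snd z /\ l2 th z < 0)).
  { intros [H1 H2].
    near_out Hb (Rmin (snd z) (- l2 th z)).
    apply Hw. apply sector_hp_le; [lra|].
    assert (L := snd_lip z w). apply Rabs_le_between in L.
    assert (L2 := l2_lip th z w). apply Rabs_le_between in L2.
    assert (Rmin (snd z) (- l2 th z) <= snd z) by apply Rmin_l.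
    assert (Rmin (snd z) (- l2 th z) <= - l2 th z) by apply Rmin_r. lra. }
  destruct Ha as [Ha|Ha].
  - right. split; [|lra]. destruct Hb2 as [H|H]; [|exact H]. exfalso. apply Hc. lra.
  - left. split; [lra|exact Hb2].
Qed.

Lemma bnd_gt th z : PI < th < 2 * PI -> is_boundary (sector th) z ->
  (snd z = 0 /\ 0 <= l2 th z) \/ (l2 th z = 0 /\ snd z <= 0).
Proof.
  intros Hth Hb.
  assert (Ha : snd z <= 0).
  { destruct (Rle_or_lt (snd z) 0) as [H|H]; [exact H|]. exfalso.
    near_out Hb (snd z).
    apply Hw. apply sector_hp_gt; [lra|]. left. assert (L := snd_lip z w). apply Rabs_le_between in L. lra. }
  assert (Hb2 : 0 <= l2 th z).
  { destruct (Rle_or_lt 0 (l2 th z)) as [H|H]; [exact H|]. exfalso.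
    near_out Hb (- l2 th z).
    apply Hw. apply sector_hp_gt; [lra|]. right. assert (L := l2_lip th z w). apply Rabs_le_between in L. lra. }
  assert (Hc : 0 <= snd z \/ l2 th z <= 0).
  { destruct (Rle_or_lt 0 (snd z)) as [H|H]; [left; exact H|].
    destruct (Rle_or_lt (l2 th z) 0) as [H'|H']; [right; exact H'|]. exfalso.
    near_in Hb (Rmin (- snd z) (l2 th z)).
    apply sector_hp_gt in Hw; [|lra].
    assert (L := snd_lip z w). apply Rabs_le_between in L.
    assert (L2 := l2_lip th z w). apply Rabs_le_between in L2.
    assert (Rmin (- snd z) (l2 th z) <= - snd z) by apply Rmin_l.
    assert (Rmin (- snd z) (l2 th z) <= l2 th z) by apply Rmin_r. lra. }
  destruct Hc as [Hc|Hc].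
  - left. split; lra.
  - right. split; lra.
Qed.

Lemma bnd_R0 th t : 0 < th < 2 * PI -> (0 <= t \/ th = PI) -> is_boundary (sector th) (t, 0).
Proof.
  intros Hth Ht eps. assert (HP := PI_RGT_0).
  set (e := eps / 2). assert (He : 0 < e) by (unfold e; destruct eps; simpl; lra).
  assert (He' : e < eps) by (unfold e; destruct eps; simpl; lra).
  set (c := cos (th/2)). set (sn := sin (th/2)).
  assert (Hsn : 0 < sn) by (unfold sn; apply sin_gt_0; lra).
  assert (Hcs : sn^2 + c^2 = 1) by apply sc.
  assert (Hid : sn * cos th - c * sin th = - sn).
  { unfold sn, c. rewrite <- sin_minus. replace (th/2 - th) with (- (th/2)) by field. apply sin_neg. }
  assert (Hm : forall a b, a^2 + b^2 = 1 -> Cmod ((t + e * a, e * b) - (t, 0)) = e).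
  { intros a b Hab. rewrite Cminus_pair. unfold Cmod; simpl fst; simpl snd.
    replace ((t + e * a - t) ^ 2 + (e * b - 0) ^ 2) with (e^2 * (a^2+b^2)) by ring. rewrite Hab, Rmult_1_r.
    apply sqrt_pow2; lra. }
  assert (Hsinth : th <= PI -> 0 <= t * sin th).
  { intros Hle. destruct Ht as [Ht|Ht].
    - apply Rmult_le_pos; [lra|]. apply sin_ge_0; lra.
    - rewrite Ht, sin_PI. lra. }
  split.
  - exists (t + e * c, e * sn). split; [|rewrite Hm; lra].
    destruct (Rle_or_lt th PI) as [Hle|Hgt].
    + apply sector_hp_le; [lra|]. unfold l2; simpl fst; simpl snd. split; [nra|].
      assert (E : e * sn * cos th - (t + e * c) * sin th = - (t * sin th) + e * (sn * cos th - c * sin th)) by ring.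
      rewrite E, Hid. specialize (Hsinth Hle). nra.
    + apply sector_hp_gt; [lra|]. left. simpl. nra.
  - exists (t + e * (-c), e * (-sn)). split; [|rewrite Hm; [lra|nra]].
    destruct (Rle_or_lt th PI) as [Hle|Hgt].
    + rewrite sector_hp_le by lra. simpl. nra.
    + rewrite sector_hp_gt by lra. unfold l2; simpl fst; simpl snd.
      assert (Ht0 : 0 <= t) by (destruct Ht; lra).
      assert (Hs : sin th < 0) by (apply sin_lt_0; lra).
      assert (E : e * - sn * cos th - (t + e * - c) * sin th = - (t * sin th) - e * (sn * cos th - c * sin th)) by ring.
      rewrite E, Hid. nra.
Qed.

Definition sgm th (z : C) : C := (cos th * fst z + sin th * snd z, sin th * fst z - cos th * snd z).

Lemma sig_pol th r a : sgm th (pol r a) = pol r (th - a).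
Proof. unfold sgm, pol; simpl. rewrite cos_minus, sin_minus. f_equal; ring. Qed.

Lemma sig_sig th z : sgm th (sgm th z) = z.
Proof.
  destruct z as [a b]. unfold sgm; simpl. assert (H := sc th).
  f_equal; [transitivity (a * (sin th ^2 + cos th ^2)) | transitivity (b * (sin th ^2 + cos th ^2))];
  try ring; rewrite H; ring.
Qed.

Lemma sig_dist th z w : Cmod (sgm th z - sgm th w) = Cmod (z - w).
Proof.
  destruct z as [a b]; destruct w as [c d]. unfold sgm; simpl fst; simpl snd.
  rewrite !Cminus_pair. unfold Cmod; simpl fst; simpl snd. f_equal. assert (H := sc th).
  replace ((a - c)^2 + (b - d)^2) with (((a-c)^2 + (b-d)^2) * (sin th ^2 + cos th^2)) by (rewrite H; ring).
  ring.
Qed.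

Lemma sig_sector th z : 0 < th < 2 * PI -> sector th z -> sector th (sgm th z).
Proof.
  intros Hth Hz. apply sector_pol in Hz; [|lra]. destruct Hz as (r & a & Hr & Ha & ->).
  rewrite sig_pol. apply sector_pol; [lra|]. exists r, (th - a). repeat split; lra.
Qed.

Lemma sig_sector_iff th z : 0 < th < 2 * PI -> (sector th (sgm th z) <-> sector th z).
Proof.
  intros Hth. split; intros H.
  - rewrite <- (sig_sig th z). apply sig_sector; assumption.
  - apply sig_sector; assumption.
Qed.

Lemma sig_bnd th z : 0 < th < 2 * PI -> is_boundary (sector th) z -> is_boundary (sector th) (sgm th z).
Proof.
  intros Hth Hb eps. destruct (Hb eps) as [[w [Hw Hd]] [w' [Hw' Hd']]]. split.
  - exists (sgm th w). split; [apply sig_sector; assumption|]. rewrite sig_dist. exact Hd.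
  - exists (sgm th w'). split; [rewrite sig_sector_iff; assumption|]. rewrite sig_dist. exact Hd'.
Qed.

Lemma bnd_classify th z : 0 < th < 2 * PI -> th <> PI -> is_boundary (sector th) z ->
  (snd z = 0 /\ 0 <= fst z) \/ (snd (sgm th z) = 0 /\ 0 <= fst (sgm th z)).
Proof.
  intros Hth Hne Hb.
  assert (Hl : snd (sgm th z) = - l2 th z) by (unfold sgm, l2; simpl; ring).
  assert (Hs : snd z = sin th * fst (sgm th z) - cos th * snd (sgm th z)).
  { rewrite <- (sig_sig th z) at 1. reflexivity. }
  assert (Hl2 : l2 th z = - fst z * sin th + snd z * cos th) by (unfold l2; ring).
  destruct (Rle_or_lt th PI) as [Hle|Hgt].
  - assert (Hsin : 0 < sin th) by (apply sin_gt_0; lra).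
    destruct (bnd_le th z ltac:(lra) Hb) as [[H1 H2]|[H1 H2]].
    + left. split; [exact H1|]. rewrite H1 in Hl2. nra.
    + right. split; [lra|]. rewrite Hl, H1, Ropp_0, Rmult_0_r, Rminus_0_r in Hs. nra.
  - assert (Hsin : sin th < 0) by (apply sin_lt_0; lra).
    destruct (bnd_gt th z ltac:(lra) Hb) as [[H1 H2]|[H1 H2]].
    + left. split; [exact H1|]. rewrite H1 in Hl2. nra.
    + right. split; [lra|]. rewrite Hl, H1, Ropp_0, Rmult_0_r, Rminus_0_r in Hs. nra.
Qed.

Lemma bnd_pi z : is_boundary (sector PI) z -> snd z = 0.
Proof.
  intros Hb. assert (HP := PI_RGT_0).
  destruct (bnd_le PI z ltac:(lra) Hb) as [[H1 H2]|[H1 H2]]; [exact H1|].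
  unfold l2 in H1. rewrite cos_PI, sin_PI in H1. lra.
Qed.

Lemma Tq_sig th x y : 0 < th < 2 * PI -> sector th x -> sector th y ->
  Tq th (sgm th x) (sgm th y) = Tq th x y.
Proof.
  intros Hth Hx Hy. apply sector_pol in Hx; [|lra]. apply sector_pol in Hy; [|lra].
  destruct Hx as (r & a & Hr & Ha & ->). destruct Hy as (s & b & Hs & Hb & ->).
  rewrite !sig_pol.
  destruct (T_polar th r s a b Hth Hr Hs Ha Hb) as [H1 [H2 H3]].
  destruct (T_polar th r s (th - a) (th - b) Hth Hr Hs ltac:(lra) ltac:(lra)) as [H1' [H2' H3']].
  assert (E : Tq th (pol r (th - a)) (pol s (th - b)) ^ 2 = Tq th (pol r a) (pol s b) ^ 2).
  { rewrite H3, H3'. f_equal; f_equal.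
    - replace (PI / th * ((th - a - (th - b)) / 2)) with (- (PI / th * ((a - b) / 2))) by (field; lra).
      rewrite sin_neg. ring.
    - replace (PI / th * ((th - a + (th - b)) / 2)) with (PI - (PI / th * ((a + b) / 2))) by (field; lra).
      rewrite sin_PI_x. reflexivity. }
  rewrite <- (sqrt_pow2 (Tq th (pol r (th - a)) (pol s (th - b)))) by exact H1'.
  rewrite E. apply sqrt_pow2. exact H1.
Qed.

Definition fz (x y z : C) := Cmod (x - z) + Cmod (z - y).
Definition Eset th (x y : C) := fun r => exists z, is_boundary (sector th) z /\ r = Cmod (x - z) + Cmod (z - y).
Definition Dv th x y := real (Glb_Rbar (Eset th x y)).

Lemma s_Dv th x y : s_metric (sector th) x y = Cmod (x - y) / Dv th x y.
Proof. reflexivity. Qed.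

Lemma tri (x y z : C) : Cmod (x - y) <= fz x y z.
Proof.
  unfold fz. replace (x - y)%C with ((x - z) + (z - y))%C.
  - apply Cmod_triangle.
  - destruct x, y, z. unfold Cminus, Cplus, Copp; simpl. f_equal; ring.
Qed.

Lemma Glb_fin th x y : (exists z0, is_boundary (sector th) z0) ->
  Glb_Rbar (Eset th x y) = Finite (Dv th x y) /\ 0 <= Dv th x y.
Proof.
  intros [z0 Hz0]. destruct (Glb_Rbar_correct (Eset th x y)) as [Hlb Hg].
  unfold Dv. destruct (Glb_Rbar (Eset th x y)) as [v| |] eqn:E.
  - split; [reflexivity|]. simpl. assert (Rbar_le 0 v).
    { apply Hg. intros r [z [_ ->]]. simpl. assert (0 <= Cmod (x - z)) by apply Cmod_ge_0.
      assert (0 <= Cmod (z - y)) by apply Cmod_ge_0. lra. }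
    simpl in H. exact H.
  - exfalso. specialize (Hlb (fz x y z0) (ex_intro _ z0 (conj Hz0 eq_refl))). simpl in Hlb. exact Hlb.
  - exfalso. assert (Rbar_le 0 m_infty).
    { apply Hg. intros r [z [_ ->]]. simpl. assert (0 <= Cmod (x - z)) by apply Cmod_ge_0.
      assert (0 <= Cmod (z - y)) by apply Cmod_ge_0. lra. }
    simpl in H. exact H.
Qed.

Lemma D_le th x y z : is_boundary (sector th) z -> Dv th x y <= fz x y z.
Proof.
  intros Hz. destruct (Glb_fin th x y (ex_intro _ z Hz)) as [E _].
  destruct (Glb_Rbar_correct (Eset th x y)) as [Hlb _]. rewrite E in Hlb.
  apply (Hlb (fz x y z)). exists z. split; [exact Hz|reflexivity].
Qed.

Lemma D_ge th x y L : (exists z0, is_boundary (sector th) z0) ->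
  (forall z, is_boundary (sector th) z -> L <= fz x y z) -> L <= Dv th x y.
Proof.
  intros Hne H. destruct (Glb_fin th x y Hne) as [E _].
  destruct (Glb_Rbar_correct (Eset th x y)) as [_ Hg]. rewrite E in Hg.
  apply (Hg (Finite L)). intros r [z [Hz ->]]. simpl. apply H. exact Hz.
Qed.

Lemma D_ge_dist th x y : (exists z0, is_boundary (sector th) z0) -> Cmod (x - y) <= Dv th x y.
Proof. intros Hne. apply D_ge; [exact Hne|]. intros. apply tri. Qed.

Lemma s_le th x y c T : (exists z0, is_boundary (sector th) z0) -> x <> y -> 0 <= T ->
  (forall z, is_boundary (sector th) z -> c * Cmod (x - y) <= T * fz x y z) ->
  c * s_metric (sector th) x y <= T.
Proof.
  intros Hne Hxy HT H. rewrite s_Dv.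
  assert (Hd : 0 < Cmod (x - y)).
  { destruct (Cmod_ge_0 (x - y)) as [h|h]; [exact h|]. exfalso. apply Hxy. symmetry in h. apply Cmod_eq_0 in h.
    destruct x, y. unfold Cminus, Cplus, Copp in h; simpl in h. inversion h. f_equal; lra. }
  assert (HD := D_ge_dist th x y Hne).
  destruct HT as [HT|HT].
  - assert (c * Cmod (x - y) / T <= Dv th x y).
    { apply D_ge; [exact Hne|]. intros z Hz. specialize (H z Hz).
      apply Rmult_le_reg_r with T; [lra|]. unfold Rdiv. rewrite Rmult_assoc, Rinv_l by lra. lra. }
    apply Rmult_le_reg_r with (Dv th x y); [lra|].
    unfold Rdiv. replace (c * (Cmod (x - y) * / Dv th x y) * Dv th x y) with (c * Cmod (x - y)) by (field; lra).
    apply Rmult_le_reg_r with (/ T); [apply Rinv_0_lt_compat; lra|].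
    replace (T * Dv th x y * / T) with (Dv th x y) by (field; lra). unfold Rdiv in H0. lra.
  - subst T. destruct Hne as [z0 Hz0]. specialize (H z0 Hz0). rewrite Rmult_0_l in H.
    assert (c <= 0) by nra. unfold Rdiv. assert (0 <= Cmod (x - y) * / Dv th x y).
    { apply Rmult_le_pos; [lra|]. apply Rlt_le, Rinv_0_lt_compat; lra. }
    nra.
Qed.

Lemma s_ge th x y c T z : is_boundary (sector th) z -> x <> y -> 0 <= T ->
  T * fz x y z <= c * Cmod (x - y) -> T <= c * s_metric (sector th) x y.
Proof.
  intros Hz Hxy HT H. rewrite s_Dv.
  assert (Hne : exists z0, is_boundary (sector th) z0) by (exists z; exact Hz).
  assert (Hd : 0 < Cmod (x - y)).
  { destruct (Cmod_ge_0 (x - y)) as [h|h]; [exact h|]. exfalso. apply Hxy. symmetry in h. apply Cmod_eq_0 in h.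
    destruct x, y. unfold Cminus, Cplus, Copp in h; simpl in h. inversion h. f_equal; lra. }
  assert (HD := D_ge_dist th x y Hne). assert (HDz := D_le th x y z Hz).
  assert (T * Dv th x y <= c * Cmod (x - y)) by nra.
  apply Rmult_le_reg_r with (Dv th x y); [lra|].
  unfold Rdiv. replace (c * (Cmod (x - y) * / Dv th x y) * Dv th x y) with (c * Cmod (x - y)) by (field; lra).
  exact H0.
Qed.

Lemma pm a b : 0 <= a -> 0 <= b -> 0 <= a * b.
Proof. apply Rmult_le_pos. Qed.

Lemma CoreA k A B p q p' q' : 1 <= k -> 0 <= A -> 0 <= B -> k*k*A <= B -> 0 <= p <= q ->
  q' - p' <= k*k*(q - p) -> p * q' <= p' * q ->
  (A+p)*(B+q') <= (B+p')*(A+q).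
Proof.
  intros Hk HA HB HAB Hpq H1 H2.
  assert (E : (B+p')*(A+q) - (A+p)*(B+q') = B*(q-p) - A*(q'-p') + (p'*q - p*q')) by ring.
  assert (F1 := pm (B - k*k*A) (q - p) ltac:(lra) ltac:(lra)).
  assert (F2 := pm A (k*k*(q-p) - (q'-p')) HA ltac:(lra)).
  lra.
Qed.

Lemma CoreB k s0 A B p q p' q' : 1 <= k -> 1 <= k*s0 -> 0 < s0 -> 0 <= A -> 0 <= B -> 0 <= p -> 0 <= q' ->
  A <= s0*s0*B -> s0*s0*B <= ((k*s0)^2 - 1)*A*B + (k*s0)^2*A ->
  p' <= k*k*p -> q <= s0*s0*q' -> 0 <= q <= s0*s0 ->
  (B+p')*(A+q) <= (k*s0)^2*(A+p)*(B+q').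
Proof.
  intros Hk HK Hs0 HA HB Hp Hq' H1 HE H2 H3 Hq.
  remember ((k*s0)^2) as K2 eqn:HK2e.
  assert (HK2 : K2 = k*k*(s0*s0)) by (rewrite HK2e; ring).
  assert (HK21 : 1 <= K2) by (rewrite HK2; nra).
  assert (Hs2 : 0 < s0*s0) by nra.
  assert (L1 : (B+p')*(A+q) <= (B + k*k*p)*(A+q)).
  { assert (F := pm (k*k*p - p') (A+q) ltac:(lra) ltac:(lra)). lra. }
  assert (L3 : k*k*(A+p)*(s0*s0*B + q) <= K2*(A+p)*(B+q')).
  { assert (F := pm (k*k*(A+p)) (s0*s0*q' - q) ltac:(apply pm; nra) ltac:(lra)).
    assert (E1 : K2*(A+p)*(B+q') - k*k*(A+p)*(s0*s0*B + q) = k*k*(A+p)*(s0*s0*q' - q)) by (rewrite HK2; ring).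
    lra. }
  assert (L4 : (B + k*k*p)*(A+q) <= k*k*(A+p)*(s0*s0*B + q)).
  { assert (Ep : k*k*p*A <= K2*p*B).
    { assert (F := pm (k*k*p) (s0*s0*B - A) ltac:(apply pm; nra) ltac:(lra)).
      assert (E1 : K2*p*B - k*k*p*A = k*k*p*(s0*s0*B - A)) by (rewrite HK2; ring). lra. }
    assert (Eq : s0*s0*(A*B + B*q) <= s0*s0*(K2*A*B + k*k*A*q)).
    { destruct (Rle_or_lt (s0*s0*B) (K2*A)) as [Hc|Hc].
      - assert (F1 := pm q (K2*A - s0*s0*B) ltac:(lra) ltac:(lra)).
        assert (F2 := pm (s0*s0) ((K2-1)*A*B) ltac:(lra) ltac:(apply pm; [apply pm|]; lra)).
        assert (E1 : s0*s0*(K2*A*B + k*k*A*q) - s0*s0*(A*B + B*q) = s0*s0*((K2-1)*A*B) + q*(K2*A - s0*s0*B)) by (rewrite HK2; ring).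
        lra.
      - assert (F1 := pm (s0*s0 - q) (s0*s0*B - K2*A) ltac:(lra) ltac:(lra)).
        assert (G : 0 <= (K2 - 1)*A*B + K2*A - s0*s0*B) by lra.
        assert (F2 := pm (s0*s0) ((K2 - 1)*A*B + K2*A - s0*s0*B) ltac:(lra) G).
        assert (E1 : s0*s0*(K2*A*B + k*k*A*q) - s0*s0*(A*B + B*q)
                   = s0*s0*((K2 - 1)*A*B + K2*A - s0*s0*B) + (s0*s0 - q)*(s0*s0*B - K2*A)) by (rewrite HK2; ring).
        lra. }
    assert (Eq' : A*B + B*q <= K2*A*B + k*k*A*q).
    { apply Rmult_le_reg_l with (s0*s0); lra. }
    assert (E1 : k*k*(A+p)*(s0*s0*B + q) - (B + k*k*p)*(A+q) = (K2*A*B + k*k*A*q - (A*B + B*q)) + (K2*p*B - k*k*p*A)) by (rewrite HK2; ring).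
    lra. }
  lra.
Qed.

Lemma CoreC k A B p p' q' Q : 0 < k <= 1 -> 0 <= A -> 0 <= B ->
  k*k*A <= B*(1 + (1-k*k)*A) -> 0 <= p -> 0 <= q' <= Q -> Q <= 1 -> k*k*p <= Q -> k*k*p <= p' ->
  k*k*p*q' <= p'*Q ->
  k*k*(A+p)*(B+q') <= (B+p')*(A+Q).
Proof.
  intros Hk HA HB HE Hp Hq HQ H1 H2 H3.
  remember (Q - k*k*p) as c eqn:Hce.
  assert (Hc : 0 <= c <= 1) by (rewrite Hce; split; [lra|]; assert (0 <= k*k*p) by (apply pm; nra); lra).
  assert (E : (B+p')*(A+Q) - k*k*(A+p)*(B+q') = (1-k*k)*A*B + B*c + A*(p' - k*k*q') + (p'*Q - k*k*p*q')) by (rewrite Hce; ring).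
  assert (Hk2 : 0 <= 1 - k*k) by nra.
  assert (F1 : c*((1-k*k)*A*B) <= (1-k*k)*A*B).
  { assert (F := pm (1-c) ((1-k*k)*A*B) ltac:(lra) ltac:(apply pm; [apply pm|]; lra)). lra. }
  assert (F2 : c*(k*k*A) <= c*(B*(1 + (1-k*k)*A))) by (apply Rmult_le_compat_l; lra).
  assert (F3 : k*k*(Q - q') * A >= 0) by (apply Rle_ge, pm; [apply pm; nra|lra]).
  assert (F4 : (k*k - k*k*k*k)*p*A >= 0) by (apply Rle_ge, pm; [apply pm; nra|lra]).
  assert (E2 : A*(k*k*c + p' - k*k*q') = k*k*(Q - q')*A + (k*k - k*k*k*k)*p*A + (p' - k*k*p)*A) by (rewrite Hce; ring).
  assert (F5 : (p' - k*k*p)*A >= 0) by (apply Rle_ge, pm; lra).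
  lra.
Qed.

Lemma CoreD k B p' q' : 0 < k <= 1 -> 0 <= B -> k*k*q' <= p' -> k*k*(B+q') <= B + p'.
Proof. intros. assert (k*k <= 1) by nra. assert (k*k*B <= B) by nra. lra. Qed.

Lemma CoreE k A B p Q p' q' : 0 < k <= 1 -> 0 <= A -> 0 <= B -> B <= k*k*A -> 0 <= p <= Q ->
  k*k*(Q - p) <= q' - p' -> p'*Q <= p*q' ->
  (B+p')*(A+Q) <= (A+p)*(B+q').
Proof.
  intros Hk HA HB HBA Hp H1 H2.
  assert (E : (A+p)*(B+q') - (B+p')*(A+Q) = A*(q'-p') - B*(Q-p) + (p*q' - p'*Q)) by ring.
  assert (F1 := pm (k*k*A - B) (Q - p) ltac:(lra) ltac:(lra)).
  assert (F2 := pm A (q' - p' - k*k*(Q-p)) HA ltac:(lra)).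
  lra.
Qed.

Lemma sinh_opp x : sinh (-x) = - sinh x.
Proof. unfold sinh. rewrite Ropp_involutive. field. Qed.

Lemma sinh_abs_sq x : sinh (Rabs x) ^ 2 = sinh x ^ 2.
Proof. unfold Rabs. destruct (Rcase_abs x); [rewrite sinh_opp; ring|reflexivity]. Qed.

Lemma sinhk_abs_sq k x : 0 <= k -> sinh (k * Rabs x) ^ 2 = sinh (k * x) ^ 2.
Proof.
  intros Hk. unfold Rabs. destruct (Rcase_abs x); [|reflexivity].
  replace (k * - x) with (- (k*x)) by ring. rewrite sinh_opp; ring.
Qed.

Lemma H1sq k X : 1 <= k -> k*k*sinh X ^2 <= sinh (k*X) ^2.
Proof.
  intros Hk. rewrite <- (sinh_abs_sq X), <- (sinhk_abs_sq k X) by lra.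
  assert (H := hyp1 k (Rabs X) Hk (Rabs_pos X)).
  assert (0 <= sinh (Rabs X)) by (apply sinh_ge0, Rabs_pos).
  assert (0 <= k * sinh (Rabs X)) by (apply pm; lra).
  assert (k * sinh (Rabs X) * (k * sinh (Rabs X)) <= sinh (k * Rabs X) * sinh (k * Rabs X)) by (apply Rmult_le_compat; lra).
  simpl. lra.
Qed.

Lemma H1'sq k X : 0 <= k <= 1 -> sinh (k*X) ^2 <= k*k*sinh X ^2.
Proof.
  intros Hk. rewrite <- (sinh_abs_sq X), <- (sinhk_abs_sq k X) by lra.
  assert (H := hyp1' k (Rabs X) Hk (Rabs_pos X)).
  assert (0 <= sinh (k * Rabs X)) by (apply sinh_ge0, pm; [lra|apply Rabs_pos]).
  assert (sinh (k * Rabs X) * sinh (k * Rabs X) <= k * sinh (Rabs X) * (k * sinh (Rabs X))) by (apply Rmult_le_compat; lra).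
  simpl. lra.
Qed.

Lemma H2sq k X : 0 <= k <= 1 -> k*k*sinh X ^2 <= sinh (k*X)^2 * (1 + (1 - k*k) * sinh X ^2).
Proof.
  intros Hk. rewrite <- (sinh_abs_sq X), <- (sinhk_abs_sq k X) by lra.
  set (Y := Rabs X). assert (HY : 0 <= Y) by apply Rabs_pos.
  assert (H := hyp2 k Y Hk HY).
  assert (0 <= sinh Y) by (apply sinh_ge0; lra).
  assert (0 <= sinh (k*Y)) by (apply sinh_ge0, pm; lra).
  assert (0 <= cosh (k*Y)) by (apply Rlt_le, cosh_pos).
  assert (0 <= k * sinh Y * cosh (k * Y)) by (apply pm; [apply pm|]; lra).
  assert (Hsq : (k * sinh Y * cosh (k * Y)) * (k * sinh Y * cosh (k * Y)) <= (sinh (k * Y) * cosh Y) * (sinh (k * Y) * cosh Y))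
    by (apply Rmult_le_compat; lra).
  assert (E1 := ch2_sh2 Y). assert (E2 := ch2_sh2 (k*Y)).
  assert (E3 : (k * sinh Y * cosh (k * Y)) * (k * sinh Y * cosh (k * Y)) = k*k*(sinh Y * sinh Y) * (cosh (k*Y) * cosh (k*Y))) by ring.
  assert (E4 : (sinh (k * Y) * cosh Y) * (sinh (k * Y) * cosh Y) = (sinh (k*Y) * sinh (k*Y)) * (cosh Y * cosh Y)) by ring.
  rewrite E3, E4 in Hsq.
  replace (cosh (k*Y) * cosh (k*Y)) with (1 + sinh (k*Y) * sinh (k*Y)) in Hsq by lra.
  replace (cosh Y * cosh Y) with (1 + sinh Y * sinh Y) in Hsq by lra.
  simpl. 
  assert (E5 : sinh (k * Y) * (sinh (k * Y) * 1) * (1 + (1 - k * k) * (sinh Y * (sinh Y * 1)))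
     - k * k * (sinh Y * (sinh Y * 1)) =
     sinh (k * Y) * sinh (k * Y) * (1 + sinh Y * sinh Y) - k * k * (sinh Y * sinh Y) * (1 + sinh (k * Y) * sinh (k * Y))) by ring.
  lra.
Qed.

Lemma Ebis_sq k X : 1 <= k ->
  sin (PI/(2*k))^2 * sinh (k*X)^2 <= ((k * sin (PI/(2*k)))^2 - 1) * sinh X^2 * sinh (k*X)^2 + (k * sin (PI/(2*k)))^2 * sinh X^2.
Proof.
  intros Hk. rewrite <- (sinh_abs_sq X), <- (sinhk_abs_sq k X) by lra.
  apply (Ebis k (Rabs X) Hk (Rabs_pos X)).
Qed.

Lemma sin_sq_diff x y : sin x ^2 - sin y ^2 = sin (x+y) * sin (x-y).
Proof.
  rewrite sin_plus, sin_minus. assert (H1 := sc x). assert (H2 := sc y).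
  transitivity (sin x ^2 * (sin y^2 + cos y^2) - sin y^2 * (sin x^2 + cos x^2)); [rewrite H1, H2; ring| ring].
Qed.

Lemma sin_abs_sq x : sin (Rabs x) ^2 = sin x ^2.
Proof. unfold Rabs. destruct (Rcase_abs x); [rewrite sin_neg; ring|reflexivity]. Qed.

Lemma sink_abs_sq k x : 0 <= k -> sin (k * Rabs x) ^ 2 = sin (k * x) ^ 2.
Proof.
  intros Hk. unfold Rabs. destruct (Rcase_abs x); [|reflexivity].
  replace (k * - x) with (- (k*x)) by ring. rewrite sin_neg; ring.
Qed.

Lemma sq_mono u v : 0 <= u -> u <= v -> u^2 <= v^2.
Proof. intros. apply pow_incr; lra. Qed.

Lemma sin_mono x y : 0 <= x -> x <= y -> y <= PI/2 -> sin x <= sin y.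
Proof. intros. apply sin_incr_1; lra. Qed.

Lemma red_le c Cx L T rs A p Q B p' q' : 0 <= c -> 0 <= Cx -> 0 <= L -> 0 <= T -> 0 < rs ->
  Cx^2 = 4*rs*(A+p) -> L^2 = 4*rs*(A+Q) -> 0 < B + q' -> T^2 = (B+p')/(B+q') ->
  c*c*(A+p)*(B+q') <= (B+p')*(A+Q) -> c * Cx <= T * L.
Proof.
  intros Hc HCx HL HT Hrs E1 E2 HB E3 H.
  apply sq_le; [apply pm; lra|apply pm; lra|].
  replace ((c*Cx)^2) with (c*c*Cx^2) by ring. replace ((T*L)^2) with (T^2*L^2) by ring.
  rewrite E1, E2, E3.
  apply Rmult_le_reg_r with (B+q'); [lra|].
  replace ((B + p') / (B + q') * (4 * rs * (A + Q)) * (B + q')) with (4*rs*((B+p')*(A+Q))) by (field; lra).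
  replace (c * c * (4 * rs * (A + p)) * (B + q')) with (4*rs*(c*c*(A+p)*(B+q'))) by ring.
  apply Rmult_le_compat_l; lra.
Qed.

Lemma red_ge c Cx L T rs A p Q B p' q' : 0 <= c -> 0 <= Cx -> 0 <= L -> 0 <= T -> 0 < rs ->
  Cx^2 = 4*rs*(A+p) -> L^2 = 4*rs*(A+Q) -> 0 < B + q' -> T^2 = (B+p')/(B+q') ->
  (B+p')*(A+Q) <= c*c*(A+p)*(B+q') -> T * L <= c * Cx.
Proof.
  intros Hc HCx HL HT Hrs E1 E2 HB E3 H.
  apply sq_le; [apply pm; lra|apply pm; lra|].
  replace ((c*Cx)^2) with (c*c*Cx^2) by ring. replace ((T*L)^2) with (T^2*L^2) by ring.
  rewrite E1, E2, E3.
  apply Rmult_le_reg_r with (B+q'); [lra|].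
  replace ((B + p') / (B + q') * (4 * rs * (A + Q)) * (B + q')) with (4*rs*((B+p')*(A+Q))) by (field; lra).
  replace (c * c * (4 * rs * (A + p)) * (B + q')) with (4*rs*(c*c*(A+p)*(B+q'))) by ring.
  apply Rmult_le_compat_l; lra.
Qed.

Lemma fb_conj (x y : C) t : Cmod (x - Cconj y) <= fz x y (t, 0).
Proof.
  unfold fz. replace (Cmod ((t,0) - y)) with (Cmod ((t,0) - Cconj y)).
  - apply tri.
  - destruct y as [y1 y2]. unfold Cconj; simpl. rewrite !Cminus_pair. unfold Cmod; simpl. f_equal. ring.
Qed.

Lemma fb_sum r s a b t : 0 <= r -> 0 <= s -> 0 <= t -> cos a + cos b <= 0 -> r + s <= fz (pol r a) (pol s b) (t, 0).
Proof.
  intros Hr Hs Ht Hc. unfold fz, pol. rewrite !Cminus_pair. unfold Cmod; simpl fst; simpl snd.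
  assert (H1 : r - t * cos a <= sqrt ((r * cos a - t) ^ 2 + (r * sin a - 0) ^ 2)).
  { apply Rle_trans with (Rabs (r - t * cos a)); [apply Rle_abs|].
    rewrite <- (sqrt_pow2 (Rabs (r - t * cos a))) by apply Rabs_pos. apply sqrt_le_1_alt. rewrite pow2_abs.
    assert (H := sc a). assert (0 <= (t * sin a)^2) by apply pow2_ge_0.
    assert (E : (r * cos a - t) ^ 2 + (r * sin a - 0) ^ 2 = (r - t * cos a)^2 + (t * sin a)^2).
    { transitivity (r^2*(sin a^2+cos a^2) - 2*r*t*cos a + t^2); [ring|].
      rewrite H. transitivity (r^2 - 2*r*t*cos a + t^2*(sin a^2 + cos a^2)); [rewrite H; ring | ring]. }
    lra. }
  assert (H2 : s - t * cos b <= sqrt ((t - s * cos b) ^ 2 + (0 - s * sin b) ^ 2)).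
  { apply Rle_trans with (Rabs (s - t * cos b)); [apply Rle_abs|].
    rewrite <- (sqrt_pow2 (Rabs (s - t * cos b))) by apply Rabs_pos. apply sqrt_le_1_alt. rewrite pow2_abs.
    assert (H := sc b). assert (0 <= (t * sin b)^2) by apply pow2_ge_0.
    assert (E : (t - s * cos b) ^ 2 + (0 - s * sin b) ^ 2 = (s - t * cos b)^2 + (t * sin b)^2).
    { transitivity (s^2*(sin b^2+cos b^2) - 2*s*t*cos b + t^2); [ring|].
      rewrite H. transitivity (s^2 - 2*s*t*cos b + t^2*(sin b^2 + cos b^2)); [rewrite H; ring | ring]. }
    lra. }
  assert (0 <= t * - (cos a + cos b)) by (apply pm; lra). lra.
Qed.

(* crossing point of a segment with the real axis *)
Lemma cross (x w : C) : 0 < snd x -> snd w < 0 ->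
  let t := (fst x * (- snd w) + fst w * snd x) / (snd x - snd w) in
  Cmod (x - (t, 0)) + Cmod ((t, 0) - w) = Cmod (x - w).
Proof.
  intros Hx Hw t. destruct x as [x1 x2]; destruct w as [w1 w2]. simpl in *.
  set (l := - w2 / (x2 - w2)).
  assert (Hl : 0 <= l <= 1).
  { unfold l. split; [apply Rdiv_le_0_compat; lra|]. apply Rmult_le_reg_r with (x2 - w2); [lra|].
    unfold Rdiv. rewrite Rmult_assoc, Rinv_l; lra. }
  assert (E1 : ((x1, x2) - (t, 0))%C = ((1 - l) * (x1 - w1), (1-l) * (x2 - w2))).
  { rewrite Cminus_pair. unfold t, l. f_equal; field; lra. }
  assert (E2 : ((t, 0) - (w1, w2))%C = (l * (x1 - w1), l * (x2 - w2))).
  { rewrite Cminus_pair. unfold t, l. f_equal; field; lra. }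
  rewrite E1, E2, Cminus_pair.
  assert (M : forall c u v, 0 <= c -> Cmod (c * u, c * v) = c * Cmod (u, v)).
  { intros c u v Hc. unfold Cmod; cbn [fst snd]. replace ((c*u)^2 + (c*v)^2) with (c^2 * (u^2+v^2)) by ring.
    rewrite sqrt_mult by (try apply pow2_ge_0; nra). rewrite sqrt_pow2 by lra. reflexivity. }
  rewrite !M by lra. ring.
Qed.

Lemma abs_lt_m a b : 0 < a -> 0 < b -> Rabs ((a-b)/2) < (a+b)/2.
Proof. intros. unfold Rabs. destruct (Rcase_abs ((a-b)/2)); lra. Qed.

Lemma abs_lt_th a b th : a < th -> b < th -> (a+b)/2 + Rabs ((a-b)/2) < th.
Proof. intros. unfold Rabs. destruct (Rcase_abs ((a-b)/2)); lra. Qed.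

Lemma k_gt1 th : 0 < th < PI -> 1 < PI/th.
Proof. intros. apply Rmult_lt_reg_r with th; [lra|]. unfold Rdiv. rewrite Rmult_assoc, Rinv_l; lra. Qed.

Lemma k_lt1 th : PI < th -> 0 < PI/th < 1.
Proof.
  intros. assert (HP := PI_RGT_0). split; [apply Rdiv_lt_0_compat; lra|].
  apply Rmult_lt_reg_r with th; [lra|]. unfold Rdiv. rewrite Rmult_assoc, Rinv_l; lra.
Qed.

Lemma kth th : 0 < th -> PI/th * th = PI.
Proof. intros. field. lra. Qed.

Lemma qp_id a b : sin ((a+b)/2) ^2 - sin ((a-b)/2)^2 = sin a * sin b.
Proof. rewrite sin_sq_diff. f_equal; f_equal; field. Qed.

Lemma qp_idk k a b : sin (k*((a+b)/2)) ^2 - sin (k*((a-b)/2))^2 = sin (k*a) * sin (k*b).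
Proof. rewrite sin_sq_diff. f_equal; f_equal; field. Qed.

Lemma C1a_pol th r s a b t : 0 < th < PI -> 0 < r -> 0 < s -> 0 < a < th -> 0 < b < th ->
  Cmod (pol r a - pol s b) <= Tq th (pol r a) (pol s b) * fz (pol r a) (pol s b) (t, 0).
Proof.
  intros Hth Hr Hs Ha Hb. assert (HP := PI_RGT_0).
  assert (Hk := k_gt1 th Hth). assert (Hkt := kth th ltac:(lra)).
  remember (PI/th) as k eqn:Hkd.
  destruct (T_polar th r s a b ltac:(lra) Hr Hs Ha Hb) as [HT0 [HBq HT2]].
  rewrite <- Hkd in HBq, HT2.
  assert (F1 := dist_AB r s a b Hr Hs). assert (F2 := distc_AB r s a b Hr Hs).
  remember (Tq th (pol r a) (pol s b)) as T eqn:HTd.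
  apply Rle_trans with (T * Cmod (pol r a - Cconj (pol s b))).
  2: { apply Rmult_le_compat_l; [exact HT0|]. apply fb_conj. }
  replace (Cmod (pol r a - pol s b)) with (1 * Cmod (pol r a - pol s b)) by ring.
  remember ((ln r - ln s)/2) as X eqn:HX.
  set (e := Rabs ((a-b)/2)). assert (He := abs_lt_m a b ltac:(lra) ltac:(lra)). fold e in He.
  assert (He2 := abs_lt_th a b th ltac:(lra) ltac:(lra)). fold e in He2.
  assert (He0 : 0 <= e) by apply Rabs_pos.
  eapply (red_le 1 _ _ T (r*s) (sinh X ^2) (sin ((a-b)/2)^2) (sin ((a+b)/2)^2) (sinh (k*X)^2)
            (sin (k*((a-b)/2))^2) (sin (k*((a+b)/2))^2)); try lra; try apply Cmod_ge_0.
  - apply Rmult_lt_0_compat; lra.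
  - replace (1*1*(sinh X ^ 2 + sin ((a - b) / 2) ^ 2) * (sinh (k * X) ^ 2 + sin (k * ((a + b) / 2)) ^ 2))
      with ((sinh X ^ 2 + sin ((a - b) / 2) ^ 2) * (sinh (k * X) ^ 2 + sin (k * ((a + b) / 2)) ^ 2)) by ring.
    apply (CoreA k); try lra.
    + apply pow2_ge_0.
    + apply pow2_ge_0.
    + apply H1sq; lra.
    + split; [apply pow2_ge_0|]. assert (E := qp_id a b).
      assert (0 < sin a) by (apply sin_gt_0; lra). assert (0 < sin b) by (apply sin_gt_0; lra).
      assert (0 <= sin a * sin b) by (apply pm; lra). lra.
    + rewrite (qp_idk k a b), (qp_id a b).
      assert (0 < sin a) by (apply sin_gt_0; lra). assert (0 < sin b) by (apply sin_gt_0; lra).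
      assert (0 <= sin (k*a)) by (apply sin_ge_0; nra). assert (0 <= sin (k*b)) by (apply sin_ge_0; nra).
      assert (sin (k*a) <= k * sin a) by (apply T2; nra).
      assert (sin (k*b) <= k * sin b) by (apply T2; nra).
      assert (sin (k*a) * sin (k*b) <= (k * sin a) * (k * sin b)) by (apply Rmult_le_compat; lra).
      lra.
    + rewrite <- (sin_abs_sq ((a-b)/2)), <- (sink_abs_sq k ((a-b)/2)) by lra. fold e.
      assert (0 <= sin e) by (apply sin_ge_0; lra).
      assert (0 <= sin (k*((a+b)/2))) by (apply sin_ge_0; nra).
      assert (0 <= sin ((a+b)/2)) by (apply sin_ge_0; lra).
      assert (0 <= sin (k*e)) by (apply sin_ge_0; nra).
      destruct He0 as [He0|He0].
      * assert (H3 := T3 k e ((a+b)/2) ltac:(lra) ltac:(lra) ltac:(nra)).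
        assert (0 <= sin e * sin (k * ((a + b) / 2))) by (apply pm; lra).
        assert ((sin e * sin (k * ((a + b) / 2)))^2 <= (sin ((a + b) / 2) * sin (k * e))^2) by (apply sq_mono; lra).
        replace (sin e ^ 2 * sin (k * ((a + b) / 2)) ^ 2) with ((sin e * sin (k * ((a + b) / 2)))^2) by ring.
        replace (sin (k * e) ^ 2 * sin ((a + b) / 2) ^ 2) with ((sin ((a + b) / 2) * sin (k * e))^2) by ring.
        lra.
      * rewrite <- He0, Rmult_0_r, sin_0. assert (0 <= sin (0) ^ 2 * 0) by lra.
        replace (0 ^ 2 * sin (k * ((a + b) / 2)) ^ 2) with 0 by ring.
        apply pm; apply pow2_ge_0.
Qed.

Lemma cmod_real_conj (y : C) t : Cmod ((t,0) - y) = Cmod ((t,0) - Cconj y).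
Proof. destruct y as [y1 y2]. unfold Cconj; simpl. rewrite !Cminus_pair. unfold Cmod; simpl. f_equal. ring. Qed.

Lemma cross_conj r s a b : 0 < r -> 0 < s -> 0 < a < PI -> 0 < b < PI -> 0 <= sin (a + b) ->
  exists t, 0 <= t /\ fz (pol r a) (pol s b) (t, 0) = Cmod (pol r a - Cconj (pol s b)).
Proof.
  intros Hr Hs Ha Hb Hab.
  assert (H1 : 0 < snd (pol r a)) by (unfold pol; simpl; apply Rmult_lt_0_compat; [lra|apply sin_gt_0; lra]).
  assert (H2 : snd (Cconj (pol s b)) < 0).
  { unfold pol, Cconj; simpl. assert (0 < s * sin b) by (apply Rmult_lt_0_compat; [lra|apply sin_gt_0; lra]). lra. }
  assert (C := cross _ _ H1 H2). simpl in C.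
  eexists. split; [|unfold fz; rewrite cmod_real_conj; exact C].
  unfold pol, Cconj; simpl.
  apply Rdiv_le_0_compat.
  - replace (r * cos a * - - (s * sin b) + s * cos b * (r * sin a)) with (r * s * sin (a + b)) by (rewrite sin_plus; ring).
    apply pm; [apply pm|]; lra.
  - assert (0 < r * sin a) by (apply Rmult_lt_0_compat; [lra|apply sin_gt_0; lra]).
    assert (0 < s * sin b) by (apply Rmult_lt_0_compat; [lra|apply sin_gt_0; lra]). lra.
Qed.

Lemma C1b_pol th r s a b : 0 < th < PI -> 0 < r -> 0 < s -> 0 < a < th -> 0 < b < th -> a + b <= th ->
  exists z, is_boundary (sector th) z /\
    Tq th (pol r a) (pol s b) * fz (pol r a) (pol s b) z <= (PI/th * sin (th/2)) * Cmod (pol r a - pol s b).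
Proof.
  intros Hth Hr Hs Ha Hb Hab. assert (HP := PI_RGT_0).
  destruct (cross_conj r s a b Hr Hs ltac:(lra) ltac:(lra) ltac:(apply sin_ge_0; lra)) as [t [Ht Hf]].
  exists (t, 0). split; [apply bnd_R0; lra|]. rewrite Hf.
  assert (Hk := k_gt1 th Hth). assert (Hkt := kth th ltac:(lra)).
  assert (Hs0e : sin (PI / (2 * (PI/th))) = sin (th/2)) by (f_equal; field; lra).
  assert (HK1 := Kge1 (PI/th) ltac:(lra)). assert (Hs0 := s0_pos (PI/th) ltac:(lra)).
  assert (HE := Ebis_sq (PI/th) ((ln r - ln s)/2) ltac:(lra)).
  rewrite Hs0e in HK1, Hs0, HE.
  remember (PI/th) as k eqn:Hkd.
  remember (sin (th/2)) as s0 eqn:Hs0d.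
  destruct (T_polar th r s a b ltac:(lra) Hr Hs Ha Hb) as [HT0 [HBq HT2]].
  rewrite <- Hkd in HBq, HT2.
  assert (F1 := dist_AB r s a b Hr Hs). assert (F2 := distc_AB r s a b Hr Hs).
  remember (Tq th (pol r a) (pol s b)) as T eqn:HTd.
  remember ((ln r - ln s)/2) as X eqn:HX.
  set (e := Rabs ((a-b)/2)). assert (He := abs_lt_m a b ltac:(lra) ltac:(lra)). fold e in He.
  assert (He0 : 0 <= e) by apply Rabs_pos.
  assert (Hm : 0 < (a+b)/2 <= th/2) by lra.
  eapply (red_ge (k*s0) _ _ T (r*s) (sinh X ^2) (sin ((a-b)/2)^2) (sin ((a+b)/2)^2) (sinh (k*X)^2)
            (sin (k*((a-b)/2))^2) (sin (k*((a+b)/2))^2)); try lra; try apply Cmod_ge_0.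
  - apply Rmult_lt_0_compat; lra.
  - replace (k * s0 * (k * s0) * (sinh X ^ 2 + sin ((a - b) / 2) ^ 2) * (sinh (k * X) ^ 2 + sin (k * ((a + b) / 2)) ^ 2))
      with ((k*s0)^2 * (sinh X ^ 2 + sin ((a - b) / 2) ^ 2) * (sinh (k * X) ^ 2 + sin (k * ((a + b) / 2)) ^ 2)) by ring.
    assert (HA : 0 <= sinh X ^2) by apply pow2_ge_0. assert (HB : 0 <= sinh (k*X) ^2) by apply pow2_ge_0.
    assert (H1 := H1sq k X ltac:(lra)).
    apply (CoreB k s0); try lra; try apply pow2_ge_0.
    + assert (k * k * sinh X ^ 2 * (s0*s0) <= sinh (k * X) ^ 2 * (s0*s0)) by (apply Rmult_le_compat_r; nra).
      assert (sinh X ^2 * 1 <= sinh X ^2 * (k*s0*(k*s0))) by (apply Rmult_le_compat_l; nra). nra.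
    + rewrite <- (sin_abs_sq ((a-b)/2)), <- (sink_abs_sq k ((a-b)/2)) by lra. fold e.
      assert (0 <= sin (k*e)) by (apply sin_ge_0; nra).
      assert (sin (k*e) <= k * sin e) by (apply T2; nra).
      assert (sin (k * e) ^2 <= (k * sin e)^2) by (apply sq_mono; lra). nra.
    + assert (H3 := T3 k ((a+b)/2) (th/2) ltac:(lra) ltac:(lra) ltac:(nra)).
      replace (k * (th/2)) with (PI/2) in H3 by nra. rewrite sin_PI2, <- Hs0d in H3.
      assert (0 <= sin ((a+b)/2)) by (apply sin_ge_0; lra).
      assert (Hq2 : sin ((a+b)/2)^2 <= (s0 * sin (k * ((a + b) / 2)))^2) by (apply sq_mono; lra).
      replace ((s0 * sin (k * ((a + b) / 2)))^2) with (s0*s0*sin (k * ((a + b) / 2))^2) in Hq2 by ring. lra.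
    + split; [apply pow2_ge_0|].
      assert (0 <= sin ((a+b)/2)) by (apply sin_ge_0; lra).
      assert (sin ((a+b)/2) <= s0) by (rewrite Hs0d; apply sin_mono; lra).
      assert (sin ((a+b)/2)^2 <= s0^2) by (apply sq_mono; lra). nra.
Qed.

Lemma sq_le_sq u v : 0 <= u -> u <= v -> u^2 <= v^2.
Proof. intros. apply pow_incr; lra. Qed.

Lemma C3a_pol th r s a b t : PI < th < 2 * PI -> 0 < r -> 0 < s -> 0 < a < th -> 0 < b < th -> 0 <= t ->
  PI/th * Cmod (pol r a - pol s b) <= Tq th (pol r a) (pol s b) * fz (pol r a) (pol s b) (t, 0).
Proof.
  intros Hth Hr Hs Ha Hb Ht. assert (HP := PI_RGT_0).
  assert (Hk := k_lt1 th ltac:(lra)). assert (Hkt := kth th ltac:(lra)).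
  remember (PI/th) as k eqn:Hkd.
  destruct (T_polar th r s a b ltac:(lra) Hr Hs Ha Hb) as [HT0 [HBq HT2]].
  rewrite <- Hkd in HBq, HT2.
  assert (F1 := dist_AB r s a b Hr Hs). assert (F2 := distc_AB r s a b Hr Hs). assert (F3 := sum_AB r s Hr Hs).
  remember (Tq th (pol r a) (pol s b)) as T eqn:HTd.
  remember ((ln r - ln s)/2) as X eqn:HX.
  set (e := Rabs ((a-b)/2)). assert (He := abs_lt_m a b ltac:(lra) ltac:(lra)). fold e in He.
  assert (He2 := abs_lt_th a b th ltac:(lra) ltac:(lra)). fold e in He2.
  assert (He0 : 0 <= e) by apply Rabs_pos.
  set (m := (a+b)/2) in *.
  assert (Hpe : sin ((a-b)/2) ^2 = sin e ^2) by (unfold e; rewrite sin_abs_sq; reflexivity).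
  assert (Hpe' : sin (k*((a-b)/2)) ^2 = sin (k*e) ^2) by (unfold e; rewrite sink_abs_sq; [reflexivity|lra]).
  rewrite Hpe in F1. rewrite Hpe' in HT2.
  assert (HA : 0 <= sinh X ^2) by apply pow2_ge_0. assert (HB : 0 <= sinh (k*X) ^2) by apply pow2_ge_0.
  assert (HH2 := H2sq k X ltac:(lra)).
  assert (Hke : k * e <= PI) by nra.
  assert (Hp1 : k*k*sin e ^2 <= sin (k*e)^2).
  { assert (0 <= sin e) by (apply sin_ge_0; nra). assert (k * sin e <= sin (k*e)) by (apply T1; nra).
    assert ((k * sin e)^2 <= sin (k*e)^2) by (apply sq_le_sq; nra). nra. }
  assert (Hk2 : k*k <= 1) by nra.
  assert (Hsq1 : forall x, sin x ^2 <= 1) by (intros; assert (H := sc x); assert (0 <= cos x ^2) by apply pow2_ge_0; lra).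
  assert (Hq'0 : 0 <= sin (k*m) ^2) by apply pow2_ge_0.
  destruct (Rle_or_lt (PI/2) e) as [HeL|HeL].
  -
    apply Rle_trans with (T * Cmod (pol r a - pol s b)).
    2: { apply Rmult_le_compat_l; [exact HT0|]. apply tri. }
    eapply (red_le k _ _ T (r*s) (sinh X ^2) (sin e^2) (sin e^2) (sinh (k*X)^2)
            (sin (k*e)^2) (sin (k*m)^2)); try lra; try apply Cmod_ge_0.
    + apply Rmult_lt_0_compat; lra.
    + assert (H := CoreD k (sinh (k*X)^2) (sin (k*e)^2) (sin (k*m)^2) ltac:(lra) HB).
      assert (k*k*sin (k*m)^2 <= sin (k*e)^2).
      { assert (k <= sin (k * (PI/2))) by (assert (H' := T1 k (PI/2) ltac:(lra) ltac:(lra)); rewrite sin_PI2 in H'; lra).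
        assert (sin (k * (PI/2)) <= sin (k*e)) by (apply sin_mono; nra).
        assert (k * k <= sin (k*e)^2) by nra.
        assert (k*k*sin (k*m)^2 <= k*k*1) by (apply Rmult_le_compat_l; [nra|apply Hsq1]). lra. }
      specialize (H H0).
      assert (0 <= sinh X ^ 2 + sin e ^ 2) by (assert (0 <= sin e ^2) by apply pow2_ge_0; lra).
      assert (E : k * k * (sinh X ^ 2 + sin e ^ 2) * (sinh (k * X) ^ 2 + sin (k * m) ^ 2)
                = (sinh X ^ 2 + sin e ^ 2) * (k * k * (sinh (k * X) ^ 2 + sin (k * m) ^ 2))) by ring.
      rewrite E. replace ((sinh (k * X) ^ 2 + sin (k * e) ^ 2) * (sinh X ^ 2 + sin e ^ 2))
        with ((sinh X ^ 2 + sin e ^ 2) * (sinh (k * X) ^ 2 + sin (k * e) ^ 2)) by ring.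
      apply Rmult_le_compat_l; lra.
  - assert (Hcd : 0 <= cos ((a-b)/2)) by (apply cos_ge_0; unfold e in HeL; unfold Rabs in HeL; destruct (Rcase_abs ((a-b)/2)); lra).
    destruct (Rle_or_lt m (PI/2)) as [Hm1|Hm1]; [|destruct (Rle_or_lt m (3*(PI/2))) as [Hm2|Hm2]].
    +
      apply Rle_trans with (T * Cmod (pol r a - Cconj (pol s b))).
      2: { apply Rmult_le_compat_l; [exact HT0|]. apply fb_conj. }
      eapply (red_le k _ _ T (r*s) (sinh X ^2) (sin e^2) (sin m^2) (sinh (k*X)^2)
            (sin (k*e)^2) (sin (k*m)^2)); try lra; try apply Cmod_ge_0.
      * apply Rmult_lt_0_compat; lra.
      * assert (Hq : sin (k*m)^2 <= sin m ^2).
        { assert (0 <= sin (k*m)) by (apply sin_ge_0; nra). apply sq_le_sq; [lra|]. apply sin_mono; nra. }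
        assert (Hpq : sin e ^2 <= sin m ^2).
        { assert (0 <= sin e) by (apply sin_ge_0; nra). apply sq_le_sq; [lra|]. apply sin_mono; lra. }
        apply (CoreC k); try lra; try apply pow2_ge_0; try apply Hsq1.
        -- assert (k*k*sin e^2 <= 1*sin e^2) by (apply Rmult_le_compat_r; [apply pow2_ge_0|lra]). lra.
        -- assert (0 <= k*k*sin e^2) by (apply pm; [nra|apply pow2_ge_0]).
           apply Rmult_le_compat; lra.
    +
      apply Rle_trans with (T * (r + s)).
      2: { apply Rmult_le_compat_l; [exact HT0|]. apply fb_sum; try lra.
           replace a with (m + (a-b)/2) by (unfold m; field). replace b with (m - (a-b)/2) at 2 by (unfold m; field).
           rewrite cos_plus, cos_minus.
           assert (cos m <= 0) by (apply cos_le_0; lra).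
           replace (cos m * cos ((a - b) / 2) - sin m * sin ((a - b) / 2) + (cos m * cos ((a - b) / 2) + sin m * sin ((a - b) / 2)))
             with (2 * (cos m * cos ((a-b)/2))) by ring.
           assert (0 <= - cos m * cos ((a-b)/2)) by (apply pm; lra). lra. }
      eapply (red_le k _ _ T (r*s) (sinh X ^2) (sin e^2) 1 (sinh (k*X)^2)
            (sin (k*e)^2) (sin (k*m)^2)); try lra; try apply Cmod_ge_0.
      * apply Rmult_lt_0_compat; lra.
      * apply (CoreC k); try lra; try apply pow2_ge_0; try apply Hsq1.
        -- split; [apply pow2_ge_0|apply Hsq1].
        -- assert (sin e ^2 <= 1) by apply Hsq1.
           assert (k*k*sin e^2 <= 1*sin e^2) by (apply Rmult_le_compat_r; [apply pow2_ge_0|lra]). lra.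
        -- assert (0 <= k*k*sin e^2) by (apply pm; [nra|apply pow2_ge_0]).
           assert (k*k*sin e^2 * sin (k*m)^2 <= k*k*sin e^2 * 1) by (apply Rmult_le_compat_l; [lra|apply Hsq1]). lra.
    +
      apply Rle_trans with (T * Cmod (pol r a - Cconj (pol s b))).
      2: { apply Rmult_le_compat_l; [exact HT0|]. apply fb_conj. }
      eapply (red_le k _ _ T (r*s) (sinh X ^2) (sin e^2) (sin m^2) (sinh (k*X)^2)
            (sin (k*e)^2) (sin (k*m)^2)); try lra; try apply Cmod_ge_0.
      * apply Rmult_lt_0_compat; lra.
      * assert (Hsm : sin m ^2 = sin (2*PI - m)^2).
        { rewrite sin_minus, sin_2PI, cos_2PI. ring. }
        assert (Hskm : sin (k*m) ^2 = sin (k*(th - m))^2).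
        { replace (k*(th - m)) with (PI - k*m) by nra. rewrite sin_PI_x. reflexivity. }
        assert (Hq : sin (k*m)^2 <= sin m ^2).
        { rewrite Hsm, Hskm. assert (0 <= sin (k*(th-m))) by (apply sin_ge_0; nra).
          apply sq_le_sq; [lra|]. apply Rle_trans with (sin (th - m)); apply sin_mono; nra. }
        assert (Hpq : sin e ^2 <= sin m ^2).
        { rewrite Hsm. assert (0 <= sin e) by (apply sin_ge_0; nra). apply sq_le_sq; [lra|]. apply sin_mono; lra. }
        apply (CoreC k); try lra; try apply pow2_ge_0; try apply Hsq1.
        -- assert (k*k*sin e^2 <= 1*sin e^2) by (apply Rmult_le_compat_r; [apply pow2_ge_0|lra]). lra.
        -- assert (0 <= k*k*sin e^2) by (apply pm; [nra|apply pow2_ge_0]).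
           apply Rmult_le_compat; lra.
Qed.

Lemma Cmod_sym (u v : C) : Cmod (u - v) = Cmod (v - u).
Proof. destruct u, v. rewrite !Cminus_pair. unfold Cmod; simpl. f_equal. ring. Qed.

Lemma fz_sym x y z : fz x y z = fz y x z.
Proof. unfold fz. rewrite (Cmod_sym x z), (Cmod_sym z y). ring. Qed.

Lemma cross_xy r s a b : 0 < r -> 0 < s -> 0 < a < PI -> PI < b < 2 * PI -> 0 <= sin (a - b) ->
  exists t, 0 <= t /\ fz (pol r a) (pol s b) (t, 0) = Cmod (pol r a - pol s b).
Proof.
  intros Hr Hs Ha Hb Hab.
  assert (H1 : 0 < snd (pol r a)) by (unfold pol; simpl; apply Rmult_lt_0_compat; [lra|apply sin_gt_0; lra]).
  assert (H2 : snd (pol s b) < 0).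
  { unfold pol; simpl. assert (sin b < 0) by (apply sin_lt_0; lra). nra. }
  assert (C := cross _ _ H1 H2). simpl in C.
  eexists. split; [|unfold fz; exact C].
  unfold pol; simpl.
  apply Rdiv_le_0_compat.
  - replace (r * cos a * - (s * sin b) + s * cos b * (r * sin a)) with (r * s * sin (a - b)) by (rewrite sin_minus; ring).
    apply pm; [apply pm|]; lra.
  - assert (0 < r * sin a) by (apply Rmult_lt_0_compat; [lra|apply sin_gt_0; lra]).
    assert (sin b < 0) by (apply sin_lt_0; lra). nra.
Qed.

Lemma C3b_pol th r s a b : PI < th < 2 * PI -> 0 < r -> 0 < s -> 0 < a < th -> 0 < b < th -> a + b <= th ->
  exists z, is_boundary (sector th) z /\
    Tq th (pol r a) (pol s b) * fz (pol r a) (pol s b) z <= 1 * Cmod (pol r a - pol s b).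
Proof.
  intros Hth Hr Hs Ha Hb Hab. assert (HP := PI_RGT_0).
  assert (Hk := k_lt1 th ltac:(lra)). assert (Hkt := kth th ltac:(lra)).
  destruct (T_polar th r s a b ltac:(lra) Hr Hs Ha Hb) as [HT0 [HBq HT2]].
  assert (F1 := dist_AB r s a b Hr Hs). assert (F2 := distc_AB r s a b Hr Hs). assert (F3 := sum_AB r s Hr Hs).
  remember (PI/th) as k eqn:Hkd.
  remember (Tq th (pol r a) (pol s b)) as T eqn:HTd.
  remember ((ln r - ln s)/2) as X eqn:HX.
  set (e := Rabs ((a-b)/2)). assert (He := abs_lt_m a b ltac:(lra) ltac:(lra)). fold e in He.
  assert (He2 := abs_lt_th a b th ltac:(lra) ltac:(lra)). fold e in He2.
  assert (He0 : 0 <= e) by apply Rabs_pos.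
  remember ((a+b)/2) as m eqn:Hmd.
  assert (Hpe : sin ((a-b)/2) ^2 = sin e ^2) by (unfold e; rewrite sin_abs_sq; reflexivity).
  assert (Hpe' : sin (k*((a-b)/2)) ^2 = sin (k*e) ^2) by (unfold e; rewrite sink_abs_sq; [reflexivity|lra]).
  rewrite Hpe in F1. rewrite Hpe' in HT2.
  assert (HA : 0 <= sinh X ^2) by apply pow2_ge_0. assert (HB : 0 <= sinh (k*X) ^2) by apply pow2_ge_0.
  assert (HH1 := H1'sq k X ltac:(lra)).
  assert (Hsq1 : forall x, sin x ^2 <= 1) by (intros; assert (H := sc x); assert (0 <= cos x ^2) by apply pow2_ge_0; lra).
  assert (Hska : 0 < sin (k*a)) by (apply sin_gt_0; nra).
  assert (Hskb : 0 < sin (k*b)) by (apply sin_gt_0; nra).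
  assert (Hqp' : sin (k*m)^2 - sin (k*e)^2 = sin (k*a) * sin (k*b)).
  { rewrite <- Hpe', Hmd. apply qp_idk. }
  destruct (Rle_or_lt (PI/2) e) as [HeL|HeL].
  -
    assert (Hcr : exists t, 0 <= t /\ fz (pol r a) (pol s b) (t, 0) = Cmod (pol r a - pol s b)).
    { unfold e, Rabs in HeL. destruct (Rcase_abs ((a-b)/2)) as [Hn|Hn].
      - apply cross_xy; try lra. replace (a - b) with (- (b - a)) by ring. rewrite sin_neg.
        assert (sin (b - a) <= 0) by (apply sin_le_0; lra). lra.
      - destruct (cross_xy s r b a Hs Hr ltac:(lra) ltac:(lra)) as [t [Ht Hf]].
        { replace (b - a) with (- (a - b)) by ring. rewrite sin_neg.
          assert (sin (a - b) <= 0) by (apply sin_le_0; lra). lra. }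
        exists t. split; [exact Ht|]. rewrite fz_sym, Hf. apply Cmod_sym. }
    destruct Hcr as [t [Ht Hf]]. exists (t, 0). split; [apply bnd_R0; lra|]. rewrite Hf.
    eapply (red_ge 1 _ _ T (r*s) (sinh X ^2) (sin e^2) (sin e^2) (sinh (k*X)^2)
            (sin (k*e)^2) (sin (k*m)^2)); try lra; try apply Cmod_ge_0.
    + apply Rmult_lt_0_compat; lra.
    + assert (0 <= sin (k*a) * sin (k*b)) by (apply pm; lra).
      assert (0 <= sinh X ^ 2 + sin e ^ 2) by (assert (0 <= sin e ^2) by apply pow2_ge_0; lra).
      assert (F : 0 <= (sinh X ^ 2 + sin e ^ 2) * (sin (k*m)^2 - sin (k*e)^2)) by (apply pm; lra).
      lra.
  - destruct (Rle_or_lt m (PI/2)) as [Hm1|Hm1].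
    +
      destruct (cross_conj r s a b Hr Hs ltac:(lra) ltac:(lra) ltac:(apply sin_ge_0; lra)) as [t [Ht Hf]].
      exists (t, 0). split; [apply bnd_R0; lra|]. rewrite Hf.
      eapply (red_ge 1 _ _ T (r*s) (sinh X ^2) (sin e^2) (sin m^2) (sinh (k*X)^2)
            (sin (k*e)^2) (sin (k*m)^2)); try lra; try apply Cmod_ge_0.
      * apply Rmult_lt_0_compat; lra.
      * replace (1 * 1 * (sinh X ^ 2 + sin e ^ 2) * (sinh (k * X) ^ 2 + sin (k * m) ^ 2))
          with ((sinh X ^ 2 + sin e ^ 2) * (sinh (k * X) ^ 2 + sin (k * m) ^ 2)) by ring.
        assert (Hqp : sin m ^2 - sin e ^2 = sin a * sin b) by (rewrite <- Hpe, Hmd; apply qp_id).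
        assert (0 < sin a) by (apply sin_gt_0; lra). assert (0 < sin b) by (apply sin_gt_0; lra).
        apply (CoreE k); try lra; try apply pow2_ge_0.
        -- split; [apply pow2_ge_0|]. assert (0 <= sin a * sin b) by (apply pm; lra). lra.
        -- rewrite Hqp, Hqp'.
           assert (k * sin a <= sin (k*a)) by (apply T1; lra).
           assert (k * sin b <= sin (k*b)) by (apply T1; lra).
           assert ((k * sin a) * (k * sin b) <= sin (k*a) * sin (k*b)) by (apply Rmult_le_compat; nra).
           lra.
        -- assert (0 <= sin e) by (apply sin_ge_0; lra).
           assert (0 <= sin m) by (apply sin_ge_0; lra).
           assert (0 <= sin (k*e)) by (apply sin_ge_0; nra).
           assert (0 <= sin (k*m)) by (apply sin_ge_0; nra).
           destruct He0 as [He0|He0].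
           ++ assert (HT3 := T3' k e m ltac:(lra) ltac:(lra) ltac:(lra)).
              assert (0 <= sin m * sin (k * e)) by (apply pm; lra).
              assert ((sin m * sin (k * e))^2 <= (sin e * sin (k * m))^2) by (apply sq_le_sq; lra).
              replace (sin (k * e) ^ 2 * sin m ^ 2) with ((sin m * sin (k * e))^2) by ring.
              replace (sin e ^ 2 * sin (k * m) ^ 2) with ((sin e * sin (k * m))^2) by ring. lra.
           ++ rewrite <- He0. rewrite Rmult_0_r, sin_0. replace (0^2 * sin m ^2) with 0 by ring.
              replace (0^2 * sin (k*m) ^2) with 0 by ring. lra.
    +
      exists (0, 0). split; [apply bnd_R0; lra|].
      assert (Hf : fz (pol r a) (pol s b) (0, 0) = r + s).
      { unfold fz. replace (Cmod (pol r a - (0,0))) with (Cmod (pol r a)).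
        - replace (Cmod ((0,0) - pol s b)) with (Cmod (pol s b)).
          + rewrite !cmod_pol by lra. reflexivity.
          + unfold pol. rewrite Cminus_pair. unfold Cmod; simpl. f_equal. ring.
        - unfold pol. rewrite Cminus_pair. unfold Cmod; simpl. f_equal. ring. }
      rewrite Hf.
      eapply (red_ge 1 _ _ T (r*s) (sinh X ^2) (sin e^2) 1 (sinh (k*X)^2)
            (sin (k*e)^2) (sin (k*m)^2)); try lra; try apply Cmod_ge_0.
      * apply Rmult_lt_0_compat; lra.
      * replace (1 * 1 * (sinh X ^ 2 + sin e ^ 2) * (sinh (k * X) ^ 2 + sin (k * m) ^ 2))
          with ((sinh X ^ 2 + sin e ^ 2) * (sinh (k * X) ^ 2 + sin (k * m) ^ 2)) by ring.
        assert (Hsm : sin (k * (PI/2)) <= sin (k*m)) by (apply sin_mono; nra).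
        assert (Hs2 : 0 <= sin (k * (PI/2))) by (apply sin_ge_0; nra).
        assert (Hq' : sin (k*(PI/2))^2 <= sin (k*m)^2) by (apply sq_le_sq; lra).
        apply (CoreE k); try lra; try apply pow2_ge_0.
        -- split; [apply pow2_ge_0|apply Hsq1].
        -- assert (Hd := sin_sq_diff (k*(PI/2)) (k*e)).
           replace (k * (PI / 2) + k * e) with (k * (PI/2 + e)) in Hd by ring.
           replace (k * (PI / 2) - k * e) with (k * (PI/2 - e)) in Hd by ring.
           assert (H1 : k * sin (PI/2 + e) <= sin (k * (PI/2 + e))) by (apply T1; lra).
           assert (H2 : k * sin (PI/2 - e) <= sin (k * (PI/2 - e))) by (apply T1; lra).
           rewrite <- cos_sin in H1. rewrite sin_shift in H2.
           assert (Hc : 0 <= cos e) by (apply cos_ge_0; lra).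
           assert (0 <= k * cos e) by (apply pm; lra).
           assert ((k * cos e) * (k * cos e) <= sin (k * (PI/2 + e)) * sin (k * (PI/2 - e))) by (apply Rmult_le_compat; lra).
           assert (Hce := sc e). assert (k*k*(sin e^2 + cos e^2) = k*k) by (rewrite Hce; ring). lra.
        -- assert (0 <= sin e) by (apply sin_ge_0; lra).
           assert (0 <= sin (k*e)) by (apply sin_ge_0; nra).
           destruct He0 as [He0|He0].
           ++ assert (HT3 := T3' k e (PI/2) ltac:(lra) ltac:(lra) ltac:(lra)).
              rewrite sin_PI2 in HT3.
              assert (sin e * sin (k * (PI/2)) <= sin e * sin (k*m)) by (apply Rmult_le_compat_l; lra).
              assert (0 <= sin (k*e)) by lra.
              assert ((sin (k*e))^2 <= (sin e * sin (k * m))^2) by (apply sq_le_sq; lra).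
              replace (sin e ^ 2 * sin (k * m) ^ 2) with ((sin e * sin (k * m))^2) by ring. lra.
           ++ rewrite <- He0. rewrite Rmult_0_r, sin_0. replace (0^2 * 1) with 0 by ring.
              replace (0^2 * sin (k*m) ^2) with 0 by ring. lra.
Qed.

Lemma fz_sig th x y z : fz (sgm th x) (sgm th y) (sgm th z) = fz x y z.
Proof. unfold fz. rewrite !sig_dist. reflexivity. Qed.

Lemma lift_all th c : 0 < th < 2 * PI -> th <> PI ->
  (forall x y, sector th x -> sector th y -> forall t, 0 <= t -> c * Cmod (x - y) <= Tq th x y * fz x y (t, 0)) ->
  forall x y, sector th x -> sector th y -> forall z, is_boundary (sector th) z ->
    c * Cmod (x - y) <= Tq th x y * fz x y z.
Proof.
  intros Hth Hne H x y Hx Hy z Hz.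
  destruct (bnd_classify th z Hth Hne Hz) as [[H1 H2]|[H1 H2]].
  - destruct z as [z1 z2]. simpl in H1, H2. subst z2. apply H; assumption.
  - rewrite <- (fz_sig th x y z), <- (sig_dist th x y), <- (Tq_sig th x y Hth Hx Hy).
    destruct (sgm th z) as [t z2] eqn:E. simpl in H1, H2. subst z2.
    apply H; try assumption; apply sig_sector; assumption.
Qed.

Lemma lift_ex th c : 0 < th < 2 * PI ->
  (forall r s a b, 0 < r -> 0 < s -> 0 < a < th -> 0 < b < th -> a + b <= th ->
     exists z, is_boundary (sector th) z /\ Tq th (pol r a) (pol s b) * fz (pol r a) (pol s b) z <= c * Cmod (pol r a - pol s b)) ->
  forall x y, sector th x -> sector th y ->
    exists z, is_boundary (sector th) z /\ Tq th x y * fz x y z <= c * Cmod (x - y).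
Proof.
  intros Hth H x y Hx Hy.
  assert (Hx' := Hx). assert (Hy' := Hy).
  apply sector_pol in Hx; [|lra]. apply sector_pol in Hy; [|lra].
  destruct Hx as (r & a & Hr & Ha & ->). destruct Hy as (s & b & Hs & Hb & ->).
  destruct (Rle_or_lt (a + b) th) as [Hab|Hab].
  - apply H; assumption.
  - destruct (H r s (th - a) (th - b) Hr Hs ltac:(lra) ltac:(lra) ltac:(lra)) as [z' [Hz' Hle]].
    exists (sgm th z'). split; [apply sig_bnd; assumption|].
    rewrite <- (Tq_sig th _ _ Hth Hx' Hy'), <- (fz_sig th), <- (sig_dist th (pol r a)), sig_sig, !sig_pol.
    exact Hle.
Qed.

Lemma Cmod_self (x : C) : Cmod (x - x) = 0.
Proof. destruct x. rewrite Cminus_pair. replace (r - r) with 0 by ring. replace (r0 - r0) with 0 by ring. apply Cmod_0. Qed.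

Lemma bnd0 th : 0 < th < 2 * PI -> exists z0, is_boundary (sector th) z0.
Proof. intros. exists (0,0). apply bnd_R0; lra. Qed.

Lemma cpow1 (x : C) : x <> 0%C -> cpow (PI/PI) x = x.
Proof.
  intros Hx. destruct (polar x Hx) as [E _].
  assert (HP := PI_RGT_0). replace (PI/PI) with 1 by (field; lra).
  unfold cpow. rewrite Rpower_1.
  - rewrite !Rmult_1_l. symmetry. exact E.
  - destruct (Cmod_ge_0 x) as [h|h]; [exact h|]. exfalso. apply Hx. symmetry in h. now apply Cmod_eq_0 in h.
Qed.

Lemma part_pi x y : sector PI x -> sector PI y -> x <> y ->
  s_metric (sector PI) x y = Tq PI x y.
Proof.
  intros Hx Hy Hxy. assert (HP := PI_RGT_0).
  assert (HT : Tq PI x y = Cmod (x - y) / Cmod (x - Cconj y)).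
  { unfold Tq. rewrite !cpow1 by (destruct Hx; destruct Hy; assumption). reflexivity. }
  apply sector_hp_le in Hx; [|lra]. apply sector_hp_le in Hy; [|lra].
  destruct Hx as [Hx _]. destruct Hy as [Hy _].
  assert (Hw : snd (Cconj y) < 0) by (destruct y; simpl in *; lra).
  assert (C := cross x (Cconj y) Hx Hw). simpl in C.
  set (t := (fst x * - snd (Cconj y) + fst (Cconj y) * snd x) / (snd x - snd (Cconj y))) in C.
  assert (Hf : fz x y (t, 0) = Cmod (x - Cconj y)) by (unfold fz; rewrite cmod_real_conj; exact C).
  assert (HL : 0 < Cmod (x - Cconj y)).
  { assert (Hs := snd_lip (Cconj y) x). apply Rabs_le_between in Hs. lra. }
  assert (HT0 : 0 <= Tq PI x y) by (rewrite HT; apply Rdiv_le_0_compat; [apply Cmod_ge_0|lra]).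
  apply Rle_antisym.
  - replace (s_metric (sector PI) x y) with (1 * s_metric (sector PI) x y) by ring.
    apply s_le; [apply bnd0; lra|exact Hxy|exact HT0|].
    intros z Hz. assert (Hz0 := bnd_pi z Hz). destruct z as [z1 z2]. simpl in Hz0. subst z2.
    rewrite HT. apply Rle_trans with (Cmod (x - y) / Cmod (x - Cconj y) * Cmod (x - Cconj y)).
    + right. field. lra.
    + apply Rmult_le_compat_l; [apply Rdiv_le_0_compat; [apply Cmod_ge_0|lra]|]. apply fb_conj.
  - rewrite <- (Rmult_1_l (s_metric (sector PI) x y)).
    apply (s_ge PI x y 1 (Tq PI x y) (t, 0)); [apply bnd_R0; lra|exact Hxy|exact HT0|].
    rewrite Hf, HT. right. field. lra.
Qed.

Lemma Tq_self th x : Tq th x x = 0.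
Proof. unfold Tq. rewrite Cmod_self. unfold Rdiv. ring. Qed.

Lemma s_self th x : s_metric (sector th) x x = 0.
Proof. rewrite s_Dv, Cmod_self. unfold Rdiv. ring. Qed.

Lemma Tq_nonneg th x y : 0 < th < 2 * PI -> sector th x -> sector th y -> 0 <= Tq th x y.
Proof.
  intros Hth Hx Hy. apply sector_pol in Hx; [|lra]. apply sector_pol in Hy; [|lra].
  destruct Hx as (r & a & Hr & Ha & ->). destruct Hy as (s & b & Hs & Hb & ->).
  destruct (T_polar th r s a b Hth Hr Hs Ha Hb) as [H _]. exact H.
Qed.

Lemma part1 theta : 0 < theta < 2 * PI ->
  (forall x y : C, sector theta x -> sector theta y ->
     (theta < PI ->
        s_metric (sector theta) x y <= tanh (rho_S theta x y / 2) /\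
        tanh (rho_S theta x y / 2) <= (PI / theta) * sin (theta / 2) * s_metric (sector theta) x y) /\
     (theta = PI ->
        s_metric (sector theta) x y = tanh (rho_S theta x y / 2)) /\
     (PI < theta ->
        (PI / theta) * s_metric (sector theta) x y <= tanh (rho_S theta x y / 2) /\
        tanh (rho_S theta x y / 2) <= s_metric (sector theta) x y)).
Proof.
  intros Hth x y Hx Hy. rewrite (T_eq theta x y Hth Hx Hy).
  assert (HP := PI_RGT_0).
  assert (Hdec : x = y \/ x <> y).
  { destruct x as [x1 x2]; destruct y as [y1 y2].
    destruct (Req_dec x1 y1); destruct (Req_dec x2 y2); [left; subst; reflexivity| right; intro h; inversion h; lra ..]. }
  destruct Hdec as [<-|Hxy].
  { rewrite Tq_self, s_self. repeat split; intros; lra. }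
  assert (HT0 := Tq_nonneg theta x y Hth Hx Hy).
  assert (Hne := bnd0 theta Hth).
  split; [|split].
  - intros Hlt. split.
    + rewrite <- (Rmult_1_l (s_metric _ x y)). apply s_le; try assumption.
      apply (lift_all theta 1 Hth ltac:(lra)); try assumption.
      intros x' y' Hx' Hy' t _. rewrite Rmult_1_l.
      apply sector_pol in Hx'; [|lra]. apply sector_pol in Hy'; [|lra].
      destruct Hx' as (r & a & Hr & Ha & ->). destruct Hy' as (s & b & Hs & Hb & ->).
      apply C1a_pol; lra.
    + destruct (lift_ex theta (PI/theta * sin (theta/2)) Hth) with (x := x) (y := y) as [z [Hz Hle]]; try assumption.
      * intros r s a b Hr Hs Ha Hb Hab. apply C1b_pol; lra.
      * apply (s_ge theta x y _ _ z Hz Hxy HT0 Hle).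
  - intros ->. apply part_pi; assumption.
  - intros Hgt. split.
    + apply s_le; try assumption.
      apply (lift_all theta (PI/theta) Hth ltac:(lra)); try assumption.
      intros x' y' Hx' Hy' t Ht.
      apply sector_pol in Hx'; [|lra]. apply sector_pol in Hy'; [|lra].
      destruct Hx' as (r & a & Hr & Ha & ->). destruct Hy' as (s & b & Hs & Hb & ->).
      apply C3a_pol; lra.
    + destruct (lift_ex theta 1 Hth) with (x := x) (y := y) as [z [Hz Hle]]; try assumption.
      * intros r s a b Hr Hs Ha Hb Hab. apply C3b_pol; lra.
      * rewrite <- (Rmult_1_l (s_metric _ x y)). apply (s_ge theta x y _ _ z Hz Hxy HT0 Hle).
Qed.

Lemma cfg th Y : 0 < th < 2 * PI ->
  let x := pol (exp (2*Y)) (th/2) in let y := pol 1 (th/2) in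
  sector th x /\ sector th y /\
  0 <= tanh (rho_S th x y / 2) /\
  tanh (rho_S th x y / 2) ^ 2 = sinh (PI/th*Y)^2 / (sinh (PI/th*Y)^2 + 1) /\
  Cmod (x - y) ^2 = 4 * exp (2*Y) * sinh Y ^2 /\
  Cmod (x - Cconj y) ^2 = 4 * exp (2*Y) * (sinh Y ^2 + sin (th/2)^2) /\
  fz x y (0,0) = exp (2*Y) + 1 /\
  (exp (2*Y) + 1)^2 = 4 * exp (2*Y) * (sinh Y ^2 + 1) /\
  sgm th x = x /\ sgm th y = y.
Proof.
  intros Hth x y. subst x y. assert (HP := PI_RGT_0).
  assert (Hr : 0 < exp (2*Y)) by apply exp_pos.
  assert (Hx : sector th (pol (exp (2*Y)) (th/2))) by (apply sector_pol; [lra|]; exists (exp (2*Y)), (th/2); repeat split; lra).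
  assert (Hy : sector th (pol 1 (th/2))) by (apply sector_pol; [lra|]; exists 1, (th/2); repeat split; lra).
  assert (HX : (ln (exp (2*Y)) - ln 1)/2 = Y) by (rewrite ln_exp, ln_1; field).
  destruct (T_polar th (exp (2*Y)) 1 (th/2) (th/2) Hth Hr ltac:(lra) ltac:(lra) ltac:(lra)) as [HT0 [_ HT2]].
  rewrite HX in HT2. rewrite <- (T_eq th _ _ Hth Hx Hy) in HT0, HT2.
  replace (PI / th * ((th / 2 - th / 2) / 2)) with 0 in HT2 by (field; lra).
  replace (PI / th * ((th / 2 + th / 2) / 2)) with (PI/2) in HT2 by (field; lra).
  rewrite sin_0, sin_PI2 in HT2.
  assert (F1 := dist_AB (exp (2*Y)) 1 (th/2) (th/2) Hr ltac:(lra)).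
  assert (F2 := distc_AB (exp (2*Y)) 1 (th/2) (th/2) Hr ltac:(lra)).
  assert (F3 := sum_AB (exp (2*Y)) 1 Hr ltac:(lra)).
  rewrite HX in F1, F2, F3.
  replace ((th / 2 - th / 2) / 2) with 0 in F1 by field. rewrite sin_0 in F1.
  replace ((th / 2 + th / 2) / 2) with (th/2) in F2 by field.
  split; [exact Hx|]. split; [exact Hy|]. split; [exact HT0|].
  split; [|split; [|split; [|split; [|split; [|split]]]]].
  - rewrite HT2. f_equal; ring.
  - rewrite F1. ring.
  - rewrite F2. ring.
  - unfold fz. replace (Cmod (pol (exp (2*Y)) (th/2) - (0,0))) with (Cmod (pol (exp (2*Y)) (th/2))).
    + replace (Cmod ((0,0) - pol 1 (th/2))) with (Cmod (pol 1 (th/2))).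
      * rewrite !cmod_pol by lra. reflexivity.
      * unfold pol. rewrite Cminus_pair. unfold Cmod; simpl. f_equal. ring.
    + unfold pol. rewrite Cminus_pair. unfold Cmod; simpl. f_equal. ring.
  - rewrite F3. ring.
  - rewrite sig_pol. replace (th - th/2) with (th/2) by field. reflexivity.
  - rewrite sig_pol. replace (th - th/2) with (th/2) by field. reflexivity.
Qed.

Lemma Cmod_pos_neq (x y : C) : 0 < Cmod (x - y) -> x <> y.
Proof. intros H E. subst. rewrite Cmod_self in H. lra. Qed.

Lemma s_lower th x y z : is_boundary (sector th) z -> 0 < Cmod (x - y) ->
  Cmod (x - y) / fz x y z <= s_metric (sector th) x y.
Proof.
  intros Hz Hd. rewrite s_Dv.
  assert (HD := D_ge_dist th x y (ex_intro _ z Hz)). assert (HDz := D_le th x y z Hz).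
  unfold Rdiv. apply Rmult_le_compat_l; [lra|]. apply Rinv_le_contravar; lra.
Qed.

Lemma s_upper th x y L : (exists z0, is_boundary (sector th) z0) -> 0 < L ->
  (forall z, is_boundary (sector th) z -> L <= fz x y z) ->
  s_metric (sector th) x y <= Cmod (x - y) / L.
Proof.
  intros Hne HL H. rewrite s_Dv.
  assert (HD := D_ge th x y L Hne H).
  unfold Rdiv. apply Rmult_le_compat_l; [apply Cmod_ge_0|]. apply Rinv_le_contravar; lra.
Qed.

Lemma s_nonneg th x y : (exists z0, is_boundary (sector th) z0) -> 0 <= s_metric (sector th) x y.
Proof.
  intros Hne. rewrite s_Dv. destruct (Glb_fin th x y Hne) as [_ H].
  unfold Rdiv. apply Rmult_le_pos; [apply Cmod_ge_0|]. destruct H as [H|H].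
  - left. apply Rinv_0_lt_compat. exact H.
  - rewrite <- H, Rinv_0. lra.
Qed.

Lemma sinh_arc_pos v : 0 < v -> 0 < arcsinh v.
Proof.
  intros Hv. destruct (Rlt_or_le 0 (arcsinh v)) as [H|H]; [exact H|].
  exfalso. assert (sinh (arcsinh v) <= 0).
  { destruct H as [H|H]. - rewrite <- sinh_0. left. apply sinh_lt; exact H. - rewrite H, sinh_0. lra. }
  rewrite sinh_arcsinh in H0. lra.
Qed.

Lemma sq_lt u v : 0 <= u -> 0 <= v -> u^2 < v^2 -> u < v.
Proof. intros. nra. Qed.

Lemma SA th c : 0 < th < PI -> 1 < c -> exists x y, sector th x /\ sector th y /\
  tanh (rho_S th x y / 2) < c * s_metric (sector th) x y.
Proof.
  intros Hth Hc. assert (HP := PI_RGT_0).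
  remember (1/(c-1)) as v eqn:Hvd. assert (Hv : 0 < v) by (rewrite Hvd; apply Rdiv_lt_0_compat; lra).
  remember (arcsinh v) as Y eqn:HYd. assert (HsY : sinh Y = v) by (rewrite HYd; apply sinh_arcsinh).
  destruct (cfg th Y ltac:(lra)) as (Hx & Hy & HT0 & HT2 & F1 & F2 & Hf & F3 & _ & _).
  remember (pol (exp (2*Y)) (th/2)) as x eqn:Hxd. remember (pol 1 (th/2)) as y eqn:Hyd.
  remember (tanh (rho_S th x y / 2)) as T eqn:HTd.
  remember (sinh (PI/th*Y)^2) as B eqn:HBd.
  assert (Hr : 0 < exp (2*Y)) by apply exp_pos.
  rewrite HsY in F1, F3.
  assert (Hd : 0 < Cmod (x - y)).
  { assert (0 < Cmod (x-y)^2) by (rewrite F1; apply Rmult_lt_0_compat; [lra|]; apply pow_lt; lra).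
    assert (0 <= Cmod (x-y)) by apply Cmod_ge_0. nra. }
  exists x, y. split; [exact Hx|]. split; [exact Hy|].
  assert (HB : 0 <= B) by (rewrite HBd; apply pow2_ge_0).
  assert (HT1 : T < 1).
  { apply (sq_lt T 1 HT0 ltac:(lra)). rewrite HT2. replace (1^2) with 1 by ring.
    apply Rmult_lt_reg_r with (B + 1); [lra|]. unfold Rdiv. rewrite Rmult_assoc, Rinv_l; lra. }
  assert (Hs := s_lower th x y (0,0) ltac:(apply bnd_R0; lra) Hd). rewrite Hf in Hs.
  assert (Hcd : exp (2*Y) + 1 <= c * Cmod (x - y)).
  { apply sq_le; [lra|apply pm; [lra|apply Cmod_ge_0]|].
    replace ((c * Cmod (x-y))^2) with (c^2 * Cmod (x-y)^2) by ring. rewrite F1, F3.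
    assert (E : (c^2 - 1) * v^2 = (c+1)/(c-1)) by (rewrite Hvd; field; lra).
    assert (1 <= (c+1)/(c-1)).
    { apply Rmult_le_reg_r with (c-1); [lra|]. unfold Rdiv. rewrite Rmult_assoc, Rinv_l; lra. }
    assert (4 * exp (2 * Y) * 1 <= 4 * exp (2 * Y) * ((c^2 - 1) * v^2)) by (apply Rmult_le_compat_l; lra).
    lra. }
  assert (1 <= c * (Cmod (x - y) / (exp (2 * Y) + 1))).
  { replace (c * (Cmod (x - y) / (exp (2 * Y) + 1))) with (c * Cmod (x - y) / (exp (2 * Y) + 1)) by (field; lra).
    apply Rmult_le_reg_r with (exp (2*Y) + 1); [lra|]. unfold Rdiv. rewrite Rmult_assoc, Rinv_l; lra. }
  assert (c * (Cmod (x - y) / (exp (2 * Y) + 1)) <= c * s_metric (sector th) x y) by (apply Rmult_le_compat_l; lra).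
  lra.
Qed.

Lemma cfg_D th Y : 0 < th < PI -> forall z, is_boundary (sector th) z ->
  Cmod (pol (exp (2*Y)) (th/2) - Cconj (pol 1 (th/2))) <= fz (pol (exp (2*Y)) (th/2)) (pol 1 (th/2)) z.
Proof.
  intros Hth z Hz. assert (HP := PI_RGT_0).
  destruct (cfg th Y ltac:(lra)) as (_ & _ & _ & _ & _ & _ & _ & _ & Sx & Sy).
  destruct (bnd_classify th z ltac:(lra) ltac:(lra) Hz) as [[H1 H2]|[H1 H2]].
  - destruct z as [z1 z2]. simpl in H1. subst z2. apply fb_conj.
  - rewrite <- (fz_sig th), Sx, Sy. destruct (sgm th z) as [t z2]. simpl in H1. subst z2. apply fb_conj.
Qed.

Lemma SB th c : 0 < th < PI -> c < PI/th * sin (th/2) -> exists x y, sector th x /\ sector th y /\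
  c * s_metric (sector th) x y < tanh (rho_S th x y / 2).
Proof.
  intros Hth Hc. assert (HP := PI_RGT_0).
  assert (Hk := k_gt1 th Hth).
  assert (Hs0p : 0 < sin (th/2)) by (apply sin_gt_0; lra).
  remember (PI/th) as k eqn:Hkd. remember (sin (th/2)) as s0 eqn:Hs0d.
  assert (HK : 1 <= k * s0).
  { assert (H := Kge1 k ltac:(lra)). replace (PI / (2*k)) with (th/2) in H by (rewrite Hkd; field; lra).
    rewrite <- Hs0d in H. exact H. }
  destruct (Rle_or_lt c 0) as [Hc0|Hc0].
  - destruct (cfg th 1 ltac:(lra)) as (Hx & Hy & HT0 & HT2 & F1 & _ & _ & _ & _ & _).
    rewrite <- Hkd in HT2.
    exists (pol (exp (2*1)) (th/2)), (pol 1 (th/2)). split; [exact Hx|]. split; [exact Hy|].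
    assert (Hs := s_nonneg th (pol (exp (2*1)) (th/2)) (pol 1 (th/2)) (bnd0 th ltac:(lra))).
    assert (HB : 0 < sinh (k*1)) by (apply sinh_pos; lra).
    assert (0 < tanh (rho_S th (pol (exp (2 * 1)) (th / 2)) (pol 1 (th / 2)) / 2)).
    { destruct HT0 as [h|h]; [exact h|]. exfalso. rewrite <- h in HT2.
      assert (0 < sinh (k*1)^2) by (apply pow_lt; lra).
      assert (0 < sinh (k * 1) ^ 2 / (sinh (k * 1) ^ 2 + 1)) by (apply Rdiv_lt_0_compat; lra).
      replace (0^2) with 0 in HT2 by ring. lra. }
    assert (c * s_metric (sector th) (pol (exp (2 * 1)) (th / 2)) (pol 1 (th / 2)) <= 0).
    { assert (0 <= - c * s_metric (sector th) (pol (exp (2 * 1)) (th / 2)) (pol 1 (th / 2))) by (apply pm; lra). lra. }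
    lra.
  - remember (k * s0 / c) as w eqn:Hwd.
    assert (Hw : 1 < w).
    { rewrite Hwd. apply Rmult_lt_reg_r with c; [lra|]. unfold Rdiv. rewrite Rmult_assoc, Rinv_l; lra. }
    remember ((w - 1)/2) as v eqn:Hvd. assert (Hv : 0 < v) by lra.
    remember (arcsinh v / k) as Y eqn:HYd.
    assert (HkY : k * Y = arcsinh v) by (rewrite HYd; field; lra).
    assert (HY : 0 < Y).
    { rewrite HYd. apply Rdiv_lt_0_compat; [apply sinh_arc_pos; lra|lra]. }
    destruct (cfg th Y ltac:(lra)) as (Hx & Hy & HT0 & HT2 & F1 & F2 & _ & _ & _ & _).
    rewrite <- Hkd in HT2. rewrite <- Hs0d in F2. rewrite HkY, sinh_arcsinh in HT2.
    assert (HD := cfg_D th Y Hth).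
    remember (pol (exp (2*Y)) (th/2)) as x eqn:Hxd. remember (pol 1 (th/2)) as y eqn:Hyd.
    remember (tanh (rho_S th x y / 2)) as T eqn:HTd.
    exists x, y. split; [exact Hx|]. split; [exact Hy|].
    assert (Hr : 0 < exp (2*Y)) by apply exp_pos.
    assert (HA : 0 < sinh Y) by (apply sinh_pos; lra).
    assert (HA2 : 0 < sinh Y ^2) by (apply pow_lt; lra).
    assert (H1 := H1sq k Y ltac:(lra)). rewrite HkY, sinh_arcsinh in H1.
    assert (HL2 : 0 < Cmod (x - Cconj y)^2).
    { rewrite F2. apply Rmult_lt_0_compat; [lra|]. assert (0 < s0^2) by (apply pow_lt; lra). lra. }
    assert (HL : 0 < Cmod (x - Cconj y)) by (assert (0 <= Cmod (x - Cconj y)) by apply Cmod_ge_0; nra).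
    assert (Hsu := s_upper th x y (Cmod (x - Cconj y)) (bnd0 th ltac:(lra)) HL HD).
    assert (Hw2 : 1 + v^2 < w^2).
    { rewrite Hvd. assert (0 < (3*w+5)*(w-1)) by (apply Rmult_lt_0_compat; lra). nra. }
    assert (Hcw : c * w = k * s0) by (rewrite Hwd; field; lra).
    assert (Hc2 : c^2 * (1 + v^2) < (k*s0)^2).
    { rewrite <- Hcw. assert (0 < c^2) by (apply pow_lt; lra).
      replace ((c*w)^2) with (c^2 * w^2) by ring. apply Rmult_lt_compat_l; lra. }
    assert (Hkey : c^2 * sinh Y ^2 * (v^2 + 1) < v^2 * (sinh Y ^2 + s0^2)).
    { assert (c^2 * sinh Y ^2 * (v^2 + 1) < (k*s0)^2 * sinh Y^2).
      { replace (c ^ 2 * sinh Y ^ 2 * (v ^ 2 + 1)) with (c^2 * (1 + v^2) * sinh Y ^2) by ring.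
        apply Rmult_lt_compat_r; lra. }
      assert ((k*s0)^2 * sinh Y^2 <= s0^2 * v^2).
      { replace ((k*s0)^2 * sinh Y^2) with (s0^2 * (k*k*sinh Y ^2)) by ring.
        apply Rmult_le_compat_l; [apply pow2_ge_0|lra]. }
      assert (0 <= v^2 * sinh Y^2) by (apply pm; apply pow2_ge_0). nra. }
    assert (HcT : c * Cmod (x - y) < T * Cmod (x - Cconj y)).
    { apply sq_lt; [apply pm; [lra|apply Cmod_ge_0]|apply pm; [exact HT0|lra]|].
      replace ((c * Cmod (x - y))^2) with (c^2 * Cmod (x-y)^2) by ring.
      replace ((T * Cmod (x - Cconj y))^2) with (T^2 * Cmod (x - Cconj y)^2) by ring.
      rewrite HT2, F1, F2.
      apply Rmult_lt_reg_r with (v^2 + 1); [assert (0 <= v^2) by apply pow2_ge_0; lra|].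
      replace (v ^ 2 / (v ^ 2 + 1) * (4 * exp (2 * Y) * (sinh Y ^ 2 + s0 ^ 2)) * (v ^ 2 + 1))
        with (4 * exp (2*Y) * (v^2 * (sinh Y ^ 2 + s0 ^ 2))) by (field; assert (0 <= v^2) by apply pow2_ge_0; lra).
      replace (c ^ 2 * (4 * exp (2 * Y) * sinh Y ^ 2) * (v ^ 2 + 1)) with (4 * exp (2*Y) * (c^2 * sinh Y ^2 * (v^2+1))) by ring.
      apply Rmult_lt_compat_l; lra. }
    assert (c * s_metric (sector th) x y <= c * (Cmod (x - y) / Cmod (x - Cconj y))) by (apply Rmult_le_compat_l; lra).
    assert (c * (Cmod (x - y) / Cmod (x - Cconj y)) < T).
    { replace (c * (Cmod (x - y) / Cmod (x - Cconj y))) with (c * Cmod (x - y) / Cmod (x - Cconj y)) by (field; lra).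
      apply Rmult_lt_reg_r with (Cmod (x - Cconj y)); [lra|]. unfold Rdiv. rewrite Rmult_assoc, Rinv_l; lra. }
    lra.
Qed.

Lemma SC th c : PI < th < 2 * PI -> PI/th < c -> exists x y, sector th x /\ sector th y /\
  tanh (rho_S th x y / 2) < c * s_metric (sector th) x y.
Proof.
  intros Hth Hc. assert (HP := PI_RGT_0).
  assert (Hk := k_lt1 th ltac:(lra)).
  remember (PI/th) as k eqn:Hkd.
  remember (c / k) as w eqn:Hwd.
  assert (Hw : 1 < w).
  { rewrite Hwd. apply Rmult_lt_reg_r with k; [lra|]. unfold Rdiv. rewrite Rmult_assoc, Rinv_l; lra. }
  remember ((w - 1)/2) as v eqn:Hvd. assert (Hv : 0 < v) by lra.
  remember (arcsinh v) as Y eqn:HYd.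
  assert (HsY : sinh Y = v) by (rewrite HYd; apply sinh_arcsinh).
  assert (HY : 0 < Y) by (rewrite HYd; apply sinh_arc_pos; lra).
  destruct (cfg th Y ltac:(lra)) as (Hx & Hy & HT0 & HT2 & F1 & _ & Hf & F3 & _ & _).
  rewrite <- Hkd in HT2. rewrite HsY in F1, F3.
  assert (H1 := H1'sq k Y ltac:(lra)). rewrite HsY in H1.
  remember (pol (exp (2*Y)) (th/2)) as x eqn:Hxd. remember (pol 1 (th/2)) as y eqn:Hyd.
  remember (tanh (rho_S th x y / 2)) as T eqn:HTd.
  remember (sinh (k*Y)^2) as B eqn:HBd.
  exists x, y. split; [exact Hx|]. split; [exact Hy|].
  assert (Hr : 0 < exp (2*Y)) by apply exp_pos.
  assert (Hv2 : 0 < v^2) by (apply pow_lt; lra).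
  assert (HB : 0 <= B) by (rewrite HBd; apply pow2_ge_0).
  assert (Hd : 0 < Cmod (x - y)).
  { assert (0 < Cmod (x-y)^2) by (rewrite F1; apply Rmult_lt_0_compat; lra).
    assert (0 <= Cmod (x-y)) by apply Cmod_ge_0. nra. }
  assert (Hs := s_lower th x y (0,0) ltac:(apply bnd_R0; lra) Hd). rewrite Hf in Hs.
  assert (Hw2 : 1 + v^2 < w^2).
  { rewrite Hvd. assert (0 < (3*w+5)*(w-1)) by (apply Rmult_lt_0_compat; lra). nra. }
  assert (Hcw : k * w = c) by (rewrite Hwd; field; lra).
  assert (HT2' : T^2 <= k*k*v^2).
  { rewrite HT2. apply Rle_trans with B; [|lra].
    apply Rmult_le_reg_r with (B+1); [lra|]. unfold Rdiv. rewrite Rmult_assoc, Rinv_l by lra. nra. }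
  assert (Hkey : T * (exp (2*Y) + 1) < c * Cmod (x - y)).
  { apply sq_lt; [apply pm; lra|apply pm; lra|].
    replace ((T * (exp (2 * Y) + 1))^2) with (T^2 * (exp (2 * Y) + 1)^2) by ring.
    replace ((c * Cmod (x - y))^2) with (c^2 * Cmod (x - y)^2) by ring.
    rewrite F3, F1.
    assert (T^2 * (4 * exp (2 * Y) * 1 * (v ^ 2 + 1)) <= k*k*v^2 * (4 * exp (2 * Y) * 1 * (v ^ 2 + 1)))
      by (apply Rmult_le_compat_r; [apply pm; [lra|]; lra|lra]).
    assert (k*k*(v^2 + 1) < c^2).
    { rewrite <- Hcw. assert (0 < k*k) by nra. replace ((k*w)^2) with (k*k*w^2) by ring.
      apply Rmult_lt_compat_l; lra. }
    assert (k*k*v^2 * (4 * exp (2 * Y) * 1 * (v ^ 2 + 1)) < c ^ 2 * (4 * exp (2 * Y) * 1 * v ^ 2)).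
    { replace (k*k*v^2 * (4 * exp (2 * Y) * 1 * (v ^ 2 + 1))) with ((k*k*(v^2+1)) * (4 * exp (2*Y) * v^2)) by ring.
      replace (c ^ 2 * (4 * exp (2 * Y) * 1 * v ^ 2)) with (c^2 * (4 * exp (2*Y) * v^2)) by ring.
      apply Rmult_lt_compat_r; [|lra]. apply Rmult_lt_0_compat; lra. }
    lra. }
  assert (T < c * (Cmod (x - y) / (exp (2 * Y) + 1))).
  { replace (c * (Cmod (x - y) / (exp (2 * Y) + 1))) with (c * Cmod (x - y) / (exp (2 * Y) + 1)) by (field; lra).
    apply Rmult_lt_reg_r with (exp (2*Y) + 1); [lra|]. unfold Rdiv. rewrite Rmult_assoc, Rinv_l; lra. }
  assert (c * (Cmod (x - y) / (exp (2 * Y) + 1)) <= c * s_metric (sector th) x y) by (apply Rmult_le_compat_l; lra).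
  lra.
Qed.

Lemma SD th c : PI < th < 2 * PI -> c < 1 -> exists x y, sector th x /\ sector th y /\
  c * s_metric (sector th) x y < tanh (rho_S th x y / 2).
Proof.
  intros Hth Hc. assert (HP := PI_RGT_0).
  assert (Hk := k_lt1 th ltac:(lra)).
  remember (PI/th) as k eqn:Hkd.
  remember (Rmax (1/(1-c)) 1) as v eqn:Hvd.
  assert (Hv1 : 1 <= v) by (rewrite Hvd; apply Rmax_r).
  assert (Hv2 : 1/(1-c) <= v) by (rewrite Hvd; apply Rmax_l).
  remember (arcsinh v / k) as Y eqn:HYd.
  assert (HkY : k * Y = arcsinh v) by (rewrite HYd; field; lra).
  assert (HY : 0 < Y) by (rewrite HYd; apply Rdiv_lt_0_compat; [apply sinh_arc_pos; lra|lra]).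
  destruct (cfg th Y ltac:(lra)) as (Hx & Hy & HT0 & HT2 & F1 & _ & _ & _ & _ & _).
  rewrite <- Hkd in HT2. rewrite HkY, sinh_arcsinh in HT2.
  remember (pol (exp (2*Y)) (th/2)) as x eqn:Hxd. remember (pol 1 (th/2)) as y eqn:Hyd.
  remember (tanh (rho_S th x y / 2)) as T eqn:HTd.
  exists x, y. split; [exact Hx|]. split; [exact Hy|].
  assert (Hr : 0 < exp (2*Y)) by apply exp_pos.
  assert (HA : 0 < sinh Y) by (apply sinh_pos; lra).
  assert (Hd : 0 < Cmod (x - y)).
  { assert (0 < Cmod (x-y)^2) by (rewrite F1; apply Rmult_lt_0_compat; [lra|]; apply pow_lt; lra).
    assert (0 <= Cmod (x-y)) by apply Cmod_ge_0. nra. }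
  assert (Hs1 : s_metric (sector th) x y <= 1).
  { assert (H := s_upper th x y (Cmod (x - y)) (bnd0 th ltac:(lra)) Hd (fun z _ => tri x y z)).
    replace (Cmod (x - y) / Cmod (x - y)) with 1 in H by (field; lra). exact H. }
  assert (Hs0 := s_nonneg th x y (bnd0 th ltac:(lra))).
  assert (HTp : 0 < T).
  { destruct HT0 as [h|h]; [exact h|]. exfalso. rewrite <- h in HT2.
    assert (0 < v^2) by (apply pow_lt; lra).
    assert (0 < v ^ 2 / (v ^ 2 + 1)) by (apply Rdiv_lt_0_compat; lra).
    replace (0^2) with 0 in HT2 by ring. lra. }
  assert (HTc : c < T).
  { destruct (Rle_or_lt c 0) as [Hc0|Hc0].
    - lra.
    - apply (sq_lt c T ltac:(lra) HT0). rewrite HT2.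
      assert (Hvc : 1 <= v * (1 - c)).
      { apply Rle_trans with (1/(1-c) * (1-c)); [right; field; lra|]. apply Rmult_le_compat_r; lra. }
      apply Rmult_lt_reg_r with (v^2 + 1); [assert (0 <= v^2) by apply pow2_ge_0; lra|].
      unfold Rdiv. rewrite Rmult_assoc, Rinv_l by (assert (0 <= v^2) by apply pow2_ge_0; lra).
      assert (v^2 * (1-c)^2 >= 1) by nra.
      nra. }
  destruct (Rle_or_lt c 0) as [Hc0|Hc0].
  - assert (c * s_metric (sector th) x y <= 0) by (assert (0 <= - c * s_metric (sector th) x y) by (apply pm; lra); lra).
    lra.
  - assert (c * s_metric (sector th) x y <= c * 1) by (apply Rmult_le_compat_l; lra). lra.
Qed.

Theorem corollary4p7 (theta : R) (Htheta : 0 < theta < 2 * PI) :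
  (forall x y : C, sector theta x -> sector theta y ->
     (theta < PI ->
        s_metric (sector theta) x y <= tanh (rho_S theta x y / 2) /\
        tanh (rho_S theta x y / 2) <= (PI / theta) * sin (theta / 2) * s_metric (sector theta) x y) /\
     (theta = PI ->
        s_metric (sector theta) x y = tanh (rho_S theta x y / 2)) /\
     (PI < theta ->
        (PI / theta) * s_metric (sector theta) x y <= tanh (rho_S theta x y / 2) /\
        tanh (rho_S theta x y / 2) <= s_metric (sector theta) x y)) /\
  (* sharpness of the constants *)
  (theta < PI ->
     (forall c, 1 < c -> exists x y, sector theta x /\ sector theta y /\
        tanh (rho_S theta x y / 2) < c * s_metric (sector theta) x y) /\
     (forall c, c < (PI / theta) * sin (theta / 2) -> exists x y, sector theta x /\ sector theta y /\
        c * s_metric (sector theta) x y < tanh (rho_S theta x y / 2))) /\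
  (PI < theta ->
     (forall c, PI / theta < c -> exists x y, sector theta x /\ sector theta y /\
        tanh (rho_S theta x y / 2) < c * s_metric (sector theta) x y) /\
     (forall c, c < 1 -> exists x y, sector theta x /\ sector theta y /\
        c * s_metric (sector theta) x y < tanh (rho_S theta x y / 2))).
Proof.
  split; [apply part1; exact Htheta|].
  split.
  - intros Hlt. split.
    + intros c Hc. apply SA; lra.
    + intros c Hc. apply SB; lra.
  - intros Hgt. split.
    + intros c Hc. apply SC; lra.
    + intros c Hc. apply SD; lra.
Qed.
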